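(* For $\omega>0$ small, $\int Y_0=\tfrac{32}{9}\omega+O(\omega^2)$, where $Y_0=\tfrac12(K_2''-K_1'-2yK_0')$.
   Context: Let $Q_\omega(y)=\sqrt{4/(1+a_\omega\cosh 2y)}$, $a_\omega=\sqrt{1+\tfrac{16}{3}\omega}$, $M_+=-\partial_y^2+1+\tfrac{\omega}{3}Q_\omega^4$, $M_-=-\partial_y^2+1-\omega Q_\omega^4$. For small $\omega>0$, $\alpha=\alpha(\omega)>0$ is smooth with $\alpha=\tfrac89\omega+O(\omega^2)$, $\lambda=1-\alpha^2$, $\kappa=\sqrt{2-\alpha^2}$, and $W_1,W_2$ are smooth real functions, even in $y$, with $M_+W_1=\lambda W_2$, $M_-W_2=\lambda W_1$, and for $j=1,2$, $k\ge0$: $|\partial_y^kW_j|\lesssim\omega^ke^{-\alpha|y|}+\omega e^{-|y|}$, $|\partial_y^k(W_1-W_2)|\lesssim\omega e^{-\kappa|y|}$, $|W_j-e^{-\alpha|y|}|\lesssim\omega e^{-\alpha|y|}$ ($\lesssim$ with constants independent of $\omega,y$). With $U=\partial_y-W_2'/W_2$, $K_2,K_1,K_0$ are the smooth coefficients of the fourth-order operator $K=\partial_y^4-2\partial_y^2+K_2\partial_y^2+K_1\partial_y+K_0+1$ determined by $UM_+M_-=KU$; they satisfy $|\partial_y^kK_i|\lesssim\omega e^{-(\kappa-\alpha)|y|}$. *)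

(* Defs.v *)
From Stdlib Require Import Reals.
From Coquelicot Require Import Coquelicot.
Open Scope R_scope.

Definition cosh_ (x : R) : R := (exp x + exp (- x)) / 2.

Definition smooth (f : R -> R) : Prop :=
  forall (n : nat) (x : R), ex_derive (Derive_n f n) x.

Definition smooth_on (a b : R) (f : R -> R) : Prop :=
  forall (n : nat) (x : R), a < x < b -> ex_derive (Derive_n f n) x.

Definition a_om (om : R) : R := sqrt (1 + 16 / 3 * om).
Definition Q_om (om y : R) : R := sqrt (4 / (1 + a_om om * cosh_ (2 * y))).

Definition M_plus_op (om : R) (f : R -> R) : R -> R :=
  fun y => - Derive_n f 2 y + f y + om / 3 * (Q_om om y) ^ 4 * f y.
Definition M_minus_op (om : R) (f : R -> R) : R -> R :=
  fun y => - Derive_n f 2 y + f y - om * (Q_om om y) ^ 4 * f y.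

Definition Uop (W2 : R -> R) (f : R -> R) : R -> R :=
  fun y => Derive f y - Derive W2 y / W2 y * f y.

Definition Kop (K2 K1 K0 : R -> R) (g : R -> R) : R -> R :=
  fun y => Derive_n g 4 y - 2 * Derive_n g 2 y + K2 y * Derive_n g 2 y
           + K1 y * Derive g y + K0 y * g y + g y.

Definition Y0 (K2 K1 K0 : R -> R) : R -> R :=
  fun y => / 2 * (Derive_n K2 2 y - Derive K1 y - 2 * y * Derive K0 y).

(* Main.v *)
Require Import Defs.
From Stdlib Require Import Reals Lra Lia Psatz.
From Coquelicot Require Import Coquelicot.
Open Scope R_scope.

Lemma Derive_n_S (h : R -> R) (k : nat) (x : R) :
  Derive_n h (S k) x = Derive_n (Derive h) k x.
Proof.
  revert x; induction k; intros x; [reflexivity|].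
  simpl. apply Derive_ext. intros t. apply IHk.
Qed.

Definition sm (n : nat) (f : R -> R) : Prop :=
  forall k, (k <= n)%nat -> forall x, ex_derive (Derive_n f k) x.

Lemma sm_S (n : nat) (h : R -> R) :
  sm (S n) h <-> ((forall x, ex_derive h x) /\ sm n (Derive h)).
Proof.
  split.
  - intros H. split.
    + intros x. apply (H 0%nat). lia.
    + intros k Hk x. apply ex_derive_ext with (Derive_n h (S k)).
      * intros t. apply Derive_n_S.
      * apply H. lia.
  - intros [H0 H] k Hk x. destruct k as [|k].
    + apply H0.
    + apply ex_derive_ext with (Derive_n (Derive h) k).
      * intros t. symmetry. apply Derive_n_S.
      * apply H. lia.
Qed.

Lemma sm_le (n m : nat) (f : R -> R) : (m <= n)%nat -> sm n f -> sm m f.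
Proof. intros Hmn H k Hk x. apply H. lia. Qed.

Lemma smooth_sm (f : R -> R) : smooth f <-> forall n, sm n f.
Proof.
  split.
  - intros H n k _ x. apply H.
  - intros H n x. apply (H n n). lia.
Qed.

Lemma sm_ext (n : nat) (f g : R -> R) : (forall t, f t = g t) -> sm n f -> sm n g.
Proof.
  intros E H k Hk x. apply ex_derive_ext with (Derive_n f k).
  - intros t. apply Derive_n_ext. exact E.
  - apply H. exact Hk.
Qed.

Lemma sm_locally (n : nat) (f : R -> R) (x : R) : sm n f ->
  locally x (fun y : R => forall k : nat, (k <= S n)%nat -> ex_derive_n f k y).
Proof.
  intros H. apply filter_forall. intros y k Hk. destruct k as [|k]; [exact I|].
  simpl. apply H. lia.
Qed.

Lemma Derive_n_plus_sm (n : nat) (f g : R -> R) (x : R) :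
  sm n f -> sm n g -> forall k, (k <= S n)%nat ->
  Derive_n (fun y => f y + g y) k x = Derive_n f k x + Derive_n g k x.
Proof.
  intros Hf Hg k Hk. apply Derive_n_plus.
  - apply filter_forall. intros y j Hj. destruct j as [|j]; [exact I|]. simpl. apply Hf. lia.
  - apply filter_forall. intros y j Hj. destruct j as [|j]; [exact I|]. simpl. apply Hg. lia.
Qed.

Lemma sm_plus (n : nat) (f g : R -> R) : sm n f -> sm n g -> sm n (fun y => f y + g y).
Proof.
  intros Hf Hg k Hk x.
  apply ex_derive_ext with (fun y => Derive_n f k y + Derive_n g k y).
  - intros t. symmetry. apply (Derive_n_plus_sm n f g t Hf Hg k). lia.
  - apply (ex_derive_plus (Derive_n f k) (Derive_n g k)); auto.
Qed.

Lemma sm_scal (n : nat) (c : R) (f : R -> R) : sm n f -> sm n (fun y => c * f y).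
Proof.
  intros Hf k Hk x.
  apply ex_derive_ext with (fun y => c * Derive_n f k y).
  - intros t. symmetry. apply Derive_n_scal_l.
  - apply ex_derive_scal. auto.
Qed.

Lemma sm_opp (n : nat) (f : R -> R) : sm n f -> sm n (fun y => - f y).
Proof.
  intros Hf. apply sm_ext with (fun y => (-1) * f y). intros; ring. apply sm_scal; auto.
Qed.

Lemma sm_minus (n : nat) (f g : R -> R) : sm n f -> sm n g -> sm n (fun y => f y - g y).
Proof.
  intros Hf Hg. apply sm_ext with (fun y => f y + - g y). intros; ring.
  apply sm_plus; auto. apply sm_opp; auto.
Qed.

Lemma sm_const (n : nat) (c : R) : sm n (fun _ => c).
Proof.
  intros k Hk x. destruct k as [|k].
  - apply ex_derive_const.
  - apply ex_derive_ext with (fun _ => 0).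
    + intros t. symmetry. apply Derive_n_const.
    + apply ex_derive_const.
Qed.

Lemma sm_mult (n : nat) : forall (f g : R -> R), sm n f -> sm n g -> sm n (fun y => f y * g y).
Proof.
  induction n as [|n IH]; intros f g Hf Hg.
  - intros k Hk x. assert (k = 0%nat) by lia. subst. simpl.
    apply ex_derive_mult; [apply (Hf 0%nat)|apply (Hg 0%nat)]; lia.
  - apply sm_S in Hf as [Hf0 Hf1]. apply sm_S in Hg as [Hg0 Hg1].
    apply sm_S. split.
    + intros x. apply ex_derive_mult; auto.
    + apply sm_ext with (fun y => Derive f y * g y + f y * Derive g y).
      * intros t. symmetry. apply Derive_mult; auto.
      * apply sm_plus.
        -- apply IH; auto. apply sm_le with (S n). lia. apply sm_S; auto.
        -- apply IH; auto. apply sm_le with (S n). lia. apply sm_S; auto.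
Qed.

Lemma sm_inv (n : nat) : forall (g : R -> R), sm n g -> (forall y, g y <> 0) -> sm n (fun y => / g y).
Proof.
  induction n as [|n IH]; intros g Hg Hnz.
  - intros k Hk x. assert (k = 0%nat) by lia. subst. simpl.
    apply ex_derive_inv; auto. apply (Hg 0%nat); lia.
  - assert (Hg' := Hg). apply sm_S in Hg' as [Hg0 Hg1].
    apply sm_S. split.
    + intros x. apply ex_derive_inv; auto.
    + apply sm_ext with (fun y => - Derive g y * ((/ g y) * (/ g y))).
      * intros t. rewrite Derive_inv; auto. field. auto.
      * apply sm_mult. apply sm_opp; auto.
        assert (sm n (fun y => / g y)) by (apply IH; auto; apply sm_le with (S n); auto; lia).
        apply sm_mult; auto.
Qed.

Lemma smooth_S (h : R -> R) : smooth h <-> ((forall x, ex_derive h x) /\ smooth (Derive h)).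
Proof.
  rewrite !smooth_sm. split.
  - intros H. split. intros x. apply (H 0%nat 0%nat). lia. auto.
    intros n. apply (sm_S n h). auto.
  - intros [H0 H] n. destruct n. intros k Hk x. assert (k=0%nat) by lia. subst; auto.
    apply sm_S. auto.
Qed.

Lemma smooth_lift1 (P : (R -> R) -> (R -> R)) :
  (forall n f, sm n f -> sm n (P f)) -> forall f, smooth f -> smooth (P f).
Proof. intros H f Hf. apply smooth_sm. intros n. apply H. apply smooth_sm. auto. Qed.

Lemma smooth_ext (f g : R -> R) : (forall t, f t = g t) -> smooth f -> smooth g.
Proof. intros E H. apply smooth_sm. intros n. apply sm_ext with f; auto. apply smooth_sm; auto. Qed.

Lemma smooth_plus f g : smooth f -> smooth g -> smooth (fun y => f y + g y).
Proof. intros; apply smooth_sm; intros; apply sm_plus; apply smooth_sm; auto. Qed.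
Lemma smooth_minus f g : smooth f -> smooth g -> smooth (fun y => f y - g y).
Proof. intros; apply smooth_sm; intros; apply sm_minus; apply smooth_sm; auto. Qed.
Lemma smooth_mult f g : smooth f -> smooth g -> smooth (fun y => f y * g y).
Proof. intros; apply smooth_sm; intros; apply sm_mult; apply smooth_sm; auto. Qed.
Lemma smooth_scal c f : smooth f -> smooth (fun y => c * f y).
Proof. intros; apply smooth_sm; intros; apply sm_scal; apply smooth_sm; auto. Qed.
Lemma smooth_const c : smooth (fun _ => c).
Proof. apply smooth_sm; intros; apply sm_const. Qed.
Lemma smooth_inv g : smooth g -> (forall y, g y <> 0) -> smooth (fun y => / g y).
Proof. intros; apply smooth_sm; intros; apply sm_inv; auto; apply smooth_sm; auto. Qed.

Lemma smooth_id : smooth (fun y => y).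
Proof.
  apply smooth_S. split. intros; apply ex_derive_id.
  apply smooth_ext with (fun _ => 1). intros t. symmetry. apply (Derive_id t).
  apply smooth_const.
Qed.

Lemma smooth_exp_lin (c : R) : smooth (fun y => exp (c * y)).
Proof.
  assert (H : forall n x, Derive_n (fun y => exp (c * y)) n x = c ^ n * exp (c * x)).
  { induction n; intros x. simpl. ring.
    simpl. rewrite (Derive_ext _ (fun y => c ^ n * exp (c * y))); [|apply IHn].
    apply is_derive_unique. auto_derive; auto. ring. }
  intros n x. apply ex_derive_ext with (fun y => c ^ n * exp (c * y)).
  intros t. rewrite H. auto. auto_derive. auto.
Qed.

Lemma smooth_ex_derive f n x : smooth f -> ex_derive (Derive_n f n) x.
Proof. intros H; apply H. Qed.

Lemma smooth_continuous f n x : smooth f -> continuous (Derive_n f n) x.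
Proof. intros H. apply (ex_derive_continuous (Derive_n f n)). apply H. Qed.

Lemma smooth_Derive f : smooth f -> smooth (Derive f).
Proof. intros H. apply smooth_S in H. tauto. Qed.

Lemma smooth_Derive_n f k : smooth f -> smooth (Derive_n f k).
Proof.
  intros H n x. apply ex_derive_ext with (Derive_n f (n + k)).
  intros t. symmetry. apply Derive_n_comp. apply H.
Qed.

Lemma Derive_n_const_plus (c : R) (f : R -> R) (n : nat) (x : R) :
  Derive_n (fun y => c + f y) (S n) x = Derive_n f (S n) x.
Proof.
  revert x; induction n; intros x.
  - simpl. unfold Derive. f_equal. apply Lim_ext. intros h. unfold Rdiv; f_equal; ring.
  - simpl. apply Derive_ext. intros t. apply IHn.
Qed.

Lemma Derive_idf (x : R) : Derive (fun y => y) x = 1.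
Proof. apply is_derive_unique. auto_derive; auto. Qed.

Lemma Derive_n_id_mult (h : R -> R) : smooth h -> forall n x,
  Derive_n (fun y => y * h y) (S n) x = x * Derive_n h (S n) x + INR (S n) * Derive_n h n x.
Proof.
  intros Hh. induction n; intros x.
  - simpl. rewrite Derive_mult. change (fun x : R => h x) with h. rewrite Derive_idf. ring. apply ex_derive_id. apply (Hh 0%nat).
  - change (Derive_n (fun y : R => y * h y) (S (S n)) x) with
      (Derive (Derive_n (fun y : R => y * h y) (S n)) x).
    rewrite (Derive_ext _ (fun y => y * Derive_n h (S n) y + INR (S n) * Derive_n h n y)); [|apply IHn].
    rewrite (Derive_plus (fun y => y * Derive_n h (S n) y) (fun y => INR (S n) * Derive_n h n y)).
    rewrite Derive_mult. rewrite Derive_scal. rewrite Derive_idf.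
    change (Derive (Derive_n h (S n)) x) with (Derive_n h (S (S n)) x).
    change (Derive (Derive_n h n) x) with (Derive_n h (S n) x).
    rewrite !S_INR. ring.
    apply ex_derive_id. apply Hh.
    apply ex_derive_mult. apply ex_derive_id. apply Hh.
    apply ex_derive_scal. apply Hh.
Qed.

Definition wf (W2 : R -> R) : R -> R := fun y => Derive W2 y / W2 y.

Lemma smooth_wf W2 : smooth W2 -> (forall y, W2 y <> 0) -> smooth (wf W2).
Proof.
  intros H Hnz. unfold wf, Rdiv. apply smooth_mult. apply smooth_Derive; auto.
  apply smooth_inv; auto.
Qed.

Lemma Derive_n_1 f x : Derive_n f 1 x = Derive f x.
Proof. reflexivity. Qed.

Lemma Derive_n_2_const (c x : R) : Derive_n (fun _ => c) 2 x = 0.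
Proof. apply (Derive_n_const 1). Qed.

Lemma Derive_n_2_id (x : R) : Derive_n (fun y => y) 2 x = 0.
Proof.
  simpl. rewrite (Derive_ext _ (fun _ => 1)). apply Derive_const.
  intros t. apply Derive_idf.
Qed.

Lemma Derive_n_affine (c d : R) (q : R -> R) (n : nat) (x : R) :
  Derive_n (fun y => c + d * q y) (S n) x = d * Derive_n q (S n) x.
Proof. rewrite Derive_n_const_plus. apply Derive_n_scal_l. Qed.

Lemma K0_formula (om : R) (W2 K2 K1 K0 : R -> R) :
  let q := fun y => Q_om om y ^ 4 in
  let w := wf W2 in
  smooth W2 -> (forall y, W2 y <> 0) -> smooth q ->
  (forall f : R -> R, smooth f -> forall y : R,
        Uop W2 (M_plus_op om (M_minus_op om f)) y = Kop K2 K1 K0 (Uop W2 f) y) ->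
  forall y, K0 y = 3 * om * Derive_n q 2 y - 2 * om / 3 * q y - om ^ 2 / 3 * q y ^ 2
     - 2 * om * w y * Derive q y + 4 * Derive_n w 3 y + 2 * (K2 y - 2) * Derive w y
     + K1 y * w y.
Proof.
  intros q w HW2 Hnz Hq Hint y.
  assert (Hw : smooth w) by (apply smooth_wf; auto).
  set (m := fun y => 1 + (- om) * q y).
  set (L1f := fun y => om * Derive_n q 2 y + m y + om / 3 * q y * m y).
  set (Lid := fun y => y * L1f y + 2 * om * Derive q y).
  assert (Hm : forall t, M_minus_op om (fun _ => 1) t = m t).
  { intros t. unfold M_minus_op, m. rewrite Derive_n_2_const. fold (q t). ring. }
  assert (HL1 : forall t, M_plus_op om (M_minus_op om (fun _ => 1)) t = L1f t).
  { intros t. unfold M_plus_op. rewrite (Derive_n_ext _ m); [|exact Hm]. rewrite Hm.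
    unfold m at 1. rewrite (Derive_n_affine 1 (-om) q 1). fold (q t). unfold L1f. ring. }
  assert (Hmid : forall t, M_minus_op om (fun y => y) t = t * m t).
  { intros t. unfold M_minus_op, m. rewrite Derive_n_2_id. fold (q t). ring. }
  assert (Hsm : smooth m).
  { unfold m. apply smooth_plus. apply smooth_const. apply smooth_scal. auto. }
  assert (HLid : forall t, M_plus_op om (M_minus_op om (fun y => y)) t = Lid t).
  { intros t. unfold M_plus_op. rewrite (Derive_n_ext _ (fun y => y * m y)); [|exact Hmid]. rewrite Hmid.
    rewrite (Derive_n_id_mult m Hsm 1).
    unfold m at 2 3. rewrite (Derive_n_affine 1 (-om) q 1). rewrite (Derive_n_affine 1 (-om) q 0).
    fold (q t). unfold Lid, L1f. simpl (INR 2). rewrite !Derive_n_1. unfold m. ring. }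
  assert (HsL1 : smooth L1f).
  { unfold L1f. apply smooth_plus. apply smooth_plus. apply smooth_scal. apply smooth_Derive_n; auto. auto.
    apply smooth_mult; auto. apply smooth_scal; auto. }
  assert (E1 := Hint (fun _ => 1) (smooth_const 1) y).
  unfold Uop at 1 in E1. rewrite (Derive_ext _ L1f) in E1; [|exact HL1]. rewrite HL1 in E1.
  assert (HU1 : forall t, Uop W2 (fun _ => 1) t = - w t).
  { intros t. unfold Uop. rewrite Derive_const. unfold w, wf. ring. }
  unfold Kop in E1. rewrite !(Derive_n_ext _ _ _ _ HU1) in E1. rewrite (Derive_ext _ _ _ HU1) in E1.
  rewrite HU1 in E1. rewrite !Derive_n_opp in E1. rewrite Derive_opp in E1.
  assert (E2 := Hint (fun y => y) smooth_id y).
  unfold Uop at 1 in E2. rewrite (Derive_ext _ Lid) in E2; [|exact HLid]. rewrite HLid in E2.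
  assert (HUid : forall t, Uop W2 (fun y => y) t = 1 + (-1) * (t * w t)).
  { intros t. unfold Uop. rewrite Derive_idf. unfold w, wf. ring. }
  unfold Kop in E2. rewrite !(Derive_n_ext _ _ _ _ HUid) in E2. rewrite (Derive_ext _ _ _ HUid) in E2.
  rewrite HUid in E2.
  rewrite (Derive_n_affine 1 (-1) (fun t => t * w t) 3) in E2.
  rewrite (Derive_n_affine 1 (-1) (fun t => t * w t) 1) in E2.
  change (Derive (fun t : R => 1 + -1 * (t * w t)) y) with (Derive_n (fun t : R => 1 + -1 * (t * w t)) 1 y) in E2.
  rewrite (Derive_n_affine 1 (-1) (fun t => t * w t) 0) in E2.
  rewrite !(Derive_n_id_mult w Hw) in E2.
  assert (HDLid : Derive Lid y = L1f y + y * Derive L1f y + 2 * om * Derive_n q 2 y).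
  { unfold Lid. rewrite Derive_plus. rewrite Derive_mult. rewrite Derive_idf. rewrite Derive_scal.
    idtac. 
    change (Derive (Derive q) y) with (Derive_n q 2 y). ring. apply ex_derive_id. apply HsL1 with (n := 0%nat).
    apply ex_derive_mult. apply ex_derive_id. apply HsL1 with (n := 0%nat).
    apply ex_derive_scal. apply Hq with (n := 1%nat). }
  rewrite HDLid in E2.
  simpl (INR _) in E2. rewrite !Derive_n_1 in E2. rewrite ?Derive_n_1 in E1.
  unfold Lid, L1f, m in *.
  change (Derive W2 y / W2 y) with (w y) in E1, E2. change (Derive_n w 0 y) with (w y) in E2.
  set (D := Derive _ y) in E1, E2. assert (E3 := f_equal (fun t => y * t) E1). cbv beta in E3. nra.
Qed.

Lemma exp_le (x y : R) : x <= y -> exp x <= exp y.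
Proof. intros [H|H]. left; apply exp_increasing; auto. subst; lra. Qed.

Lemma ball_R (l eps y : R) : Rabs (y - l) < eps -> ball l eps y.
Proof. intros H. unfold ball; simpl; unfold AbsRing_ball; simpl. unfold abs, minus, plus, opp; simpl. exact H. Qed.

Lemma ball_R' (l eps y : R) : ball l eps y -> Rabs (y - l) < eps.
Proof. intros H. unfold ball in H; simpl in H; unfold AbsRing_ball in H; simpl in H. unfold abs, minus, plus, opp in H; simpl in H. exact H. Qed.

Lemma exp_small (K c eps : R) : 0 < c -> 0 < eps -> exists X, 0 <= X /\ forall x, X <= x -> K * exp (- c * x) < eps.
Proof.
  intros Hc He.
  set (K' := Rabs K + 1).
  exists (Rmax 0 (ln (K' / eps) / c)). split. apply Rmax_l.
  intros x Hx.
  assert (HK' : 0 < K') by (unfold K'; pose proof (Rabs_pos K); lra).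
  assert (H1 : exp (- c * x) <= eps / K').
  { assert (ln (K'/eps) / c <= x) by (eapply Rle_trans; [apply Rmax_r|exact Hx]).
    assert (ln (K'/eps) <= c * x).
    { apply Rmult_le_reg_r with (/ c). apply Rinv_0_lt_compat; auto.
      replace (c * x * / c) with x by (field; lra). exact H. }
    replace (eps / K') with (exp (- ln (K' / eps))).
    apply exp_le. lra. 
    rewrite exp_Ropp. rewrite exp_ln. field. split; lra. apply Rdiv_lt_0_compat; lra. }
  assert (Hep : 0 < exp (- c * x)) by apply exp_pos.
  apply Rlt_le_trans with (K' * exp (- c * x)).
  apply Rmult_lt_compat_r. lra. unfold K'. pose proof (Rle_abs K). lra.
  apply Rle_trans with (K' * (eps / K')). apply Rmult_le_compat_l; lra.
  replace (K' * (eps / K')) with eps by (field; lra). lra.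
Qed.

Lemma lim_pinf (f : R -> R) (l M c : R) : 0 < c ->
  (forall y, 0 <= y -> Rabs (f y - l) <= M * exp (- c * y)) ->
  filterlim f (Rbar_locally p_infty) (locally l).
Proof.
  intros Hc H. apply filterlim_locally. intros eps.
  destruct (exp_small M c eps Hc (cond_pos eps)) as [X [HX0 HX]].
  exists X. intros x Hx. apply ball_R. eapply Rle_lt_trans. apply H. lra. apply HX. lra.
Qed.

Lemma lim_minf (f : R -> R) (l M c : R) : 0 < c ->
  (forall y, y <= 0 -> Rabs (f y - l) <= M * exp (c * y)) ->
  filterlim f (Rbar_locally m_infty) (locally l).
Proof.
  intros Hc H. apply filterlim_locally. intros eps.
  destruct (exp_small M c eps Hc (cond_pos eps)) as [X [HX0 HX]].
  exists (- X). intros x Hx. apply ball_R. eapply Rle_lt_trans. apply H. lra.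
  replace (c * x) with (- c * (- x)) by ring. apply HX. lra.
Qed.

Lemma lim_pinf_bound (F : R -> R) (l K : R) :
  filterlim F (Rbar_locally p_infty) (locally l) -> (forall x, 0 <= x -> Rabs (F x) <= K) -> Rabs l <= K.
Proof.
  intros HF HK. destruct (Rle_dec (Rabs l) K) as [h|h]; auto. exfalso.
  assert (He : 0 < Rabs l - K) by lra.
  apply filterlim_locally with (eps := mkposreal _ He) in HF.
  destruct HF as [M HM]. set (x := Rmax 0 (M + 1)).
  assert (Hx : M < x) by (unfold x; pose proof (Rmax_r 0 (M+1)); lra).
  specialize (HM x Hx). apply ball_R' in HM. simpl in HM.
  specialize (HK x (Rmax_l _ _)).
  pose proof (Rabs_triang_inv l (F x)). rewrite Rabs_minus_sym in HM. lra.
Qed.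

Lemma lim_minf_bound (F : R -> R) (l K : R) :
  filterlim F (Rbar_locally m_infty) (locally l) -> (forall x, x <= 0 -> Rabs (F x) <= K) -> Rabs l <= K.
Proof.
  intros HF HK. destruct (Rle_dec (Rabs l) K) as [h|h]; auto. exfalso.
  assert (He : 0 < Rabs l - K) by lra.
  apply filterlim_locally with (eps := mkposreal _ He) in HF.
  destruct HF as [M HM]. set (x := Rmin 0 (M - 1)).
  assert (Hx : x < M) by (unfold x; pose proof (Rmin_r 0 (M-1)); lra).
  specialize (HM x Hx). apply ball_R' in HM. simpl in HM.
  specialize (HK x (Rmin_l _ _)).
  pose proof (Rabs_triang_inv l (F x)). rewrite Rabs_minus_sym in HM. lra.
Qed.

Lemma ex_RInt_cont (f : R -> R) a b : (forall x, continuous f x) -> ex_RInt f a b.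
Proof. intros H. apply (ex_RInt_continuous (V := R_CompleteNormedModule)). intros; apply H. Qed.

Lemma RInt_le_abs_bound (f g : R -> R) u v : u <= v ->
  (forall x, continuous f x) -> (forall x, continuous g x) ->
  (forall x, u <= x <= v -> Rabs (f x) <= g x) -> Rabs (RInt f u v) <= RInt g u v.
Proof.
  intros Huv Hf Hg H.
  assert (E1 : RInt f u v <= RInt g u v).
  { apply RInt_le; auto; try apply ex_RInt_cont; auto. intros x Hx.
    pose proof (Rle_abs (f x)). pose proof (H x). lra. }
  assert (E2 : RInt (fun x => - f x) u v <= RInt g u v).
  { apply RInt_le; auto. apply ex_RInt_cont. intros x. apply (continuous_opp f). auto. apply ex_RInt_cont; auto.
    intros x Hx. pose proof (Rle_abs (- f x)). rewrite Rabs_Ropp in H0.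
    pose proof (H x). lra. }
  assert (E3 : RInt (fun x => - f x) u v = - RInt f u v).
  { apply (RInt_opp (V := R_CompleteNormedModule) f). apply ex_RInt_cont; auto. }
  rewrite E3 in E2.
  unfold Rabs. destruct Rcase_abs; lra.
Qed.

Lemma RInt_exp_neg (M c u v : R) : 0 < c ->
  RInt (fun s => M * exp (- c * s)) u v = M / c * (exp (- c * u) - exp (- c * v)).
Proof.
  intros Hc. apply is_RInt_unique.
  replace (M / c * (exp (- c * u) - exp (- c * v))) with
    (minus ((fun s => - (M / c) * exp (- c * s)) v) ((fun s => - (M / c) * exp (- c * s)) u)).
  apply (is_RInt_derive (fun s => - (M / c) * exp (- c * s))).
  - intros x _. auto_derive; auto. field. lra.
  - intros x _. apply (ex_derive_continuous (fun s => M * exp (- c * s))). auto_derive. auto.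
  - unfold minus, plus, opp; simpl. ring.
Qed.

Lemma RInt_exp_pos (M c u v : R) : 0 < c ->
  RInt (fun s => M * exp (c * s)) u v = M / c * (exp (c * v) - exp (c * u)).
Proof.
  intros Hc. apply is_RInt_unique.
  replace (M / c * (exp (c * v) - exp (c * u))) with
    (minus ((fun s => (M / c) * exp (c * s)) v) ((fun s => (M / c) * exp (c * s)) u)).
  apply (is_RInt_derive (fun s => (M / c) * exp (c * s))).
  - intros x _. auto_derive; auto. field. lra.
  - intros x _. apply (ex_derive_continuous (fun s => M * exp (c * s))). auto_derive. auto.
  - unfold minus, plus, opp; simpl. ring.
Qed.

Lemma tail_pos (f : R -> R) (M c : R) : 0 < c -> (forall x, continuous f x) ->
  (forall x, Rabs (f x) <= M * exp (- c * Rabs x)) ->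
  forall u v, 0 <= u -> u <= v -> Rabs (RInt f u v) <= M / c * exp (- c * u).
Proof.
  intros Hc Hf H u v Hu Huv.
  eapply Rle_trans. apply (RInt_le_abs_bound f (fun s => M * exp (- c * s))); auto.
  intros x. apply (ex_derive_continuous (fun s => M * exp (- c * s))). auto_derive. auto.
  intros x Hx. pose proof (H x) as Hx'. rewrite (Rabs_right x) in Hx' by lra. exact Hx'.
  rewrite RInt_exp_neg; auto.
  assert (HM : 0 <= M). { pose proof (H 0). pose proof (Rabs_pos (f 0)). pose proof (exp_pos (- c * Rabs 0)). nra. }
  pose proof (exp_pos (- c * v)). assert (0 <= M / c) by (apply Rdiv_le_0_compat; lra). nra.
Qed.

Lemma tail_neg (f : R -> R) (M c : R) : 0 < c -> (forall x, continuous f x) ->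
  (forall x, Rabs (f x) <= M * exp (- c * Rabs x)) ->
  forall u v, u <= v -> v <= 0 -> Rabs (RInt f u v) <= M / c * exp (c * v).
Proof.
  intros Hc Hf H u v Huv Hv.
  eapply Rle_trans. apply (RInt_le_abs_bound f (fun s => M * exp (c * s))); auto.
  intros x. apply (ex_derive_continuous (fun s => M * exp (c * s))). auto_derive. auto.
  intros x Hx. pose proof (H x) as Hx'. rewrite (Rabs_left1 x) in Hx' by lra. replace (c * x) with (- c * - x) by ring. exact Hx'.
  rewrite RInt_exp_pos; auto.
  assert (HM : 0 <= M). { pose proof (H 0). pose proof (Rabs_pos (f 0)). pose proof (exp_pos (- c * Rabs 0)). nra. }
  pose proof (exp_pos (c * u)). assert (0 <= M / c) by (apply Rdiv_le_0_compat; lra). nra.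
Qed.

Lemma RInt_diff (f : R -> R) u v : (forall x, continuous f x) ->
  RInt f 0 v - RInt f 0 u = RInt f u v.
Proof.
  intros Hf. rewrite <- (RInt_Chasles f 0 u v); try apply ex_RInt_cont; auto.
  unfold plus; simpl. ring.
Qed.

Lemma RInt_swap_abs (f : R -> R) u v : (forall x, continuous f x) ->
  Rabs (RInt f u v) = Rabs (RInt f v u).
Proof.
  intros Hf. rewrite <- opp_RInt_swap. unfold opp; simpl. apply Rabs_Ropp. apply ex_RInt_cont; auto.
Qed.

Lemma int_dom (f : R -> R) (M c : R) : 0 < c -> (forall x, continuous f x) ->
  (forall x, Rabs (f x) <= M * exp (- c * Rabs x)) ->
  exists l, is_RInt_gen f (Rbar_locally m_infty) (Rbar_locally p_infty) l /\ Rabs l <= 2 * M / c.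
Proof.
  intros Hc Hf H.
  set (F := fun x => RInt f 0 x).
  assert (HdF : forall x, is_derive F x (f x)).
  { intros x. apply (is_derive_RInt f F 0). apply filter_forall. intros b.
    apply (RInt_correct (V := R_CompleteNormedModule)). apply ex_RInt_cont; auto. apply Hf. }
  assert (HM : 0 <= M). { pose proof (H 0). pose proof (Rabs_pos (f 0)). pose proof (exp_pos (- c * Rabs 0)). nra. }
  assert (Lp : exists lb, filterlim F (Rbar_locally p_infty) (locally lb)).
  { apply (Hierarchy.filterlim_locally_cauchy F (F := Rbar_locally p_infty)).
    intros eps. destruct (exp_small (M / c) c eps Hc (cond_pos eps)) as [X [HX0 HX]].
    exists (fun x => X < x). split. exists X. auto.
    intros u v Hu Hv. apply ball_R. unfold F. rewrite RInt_diff; auto.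
    destruct (Rle_dec u v).
    - eapply Rle_lt_trans. apply (tail_pos f M c); auto. lra. apply HX. lra.
    - rewrite RInt_swap_abs; auto. eapply Rle_lt_trans. apply (tail_pos f M c); auto. lra. lra. apply HX. lra. }
  assert (Lm : exists la, filterlim F (Rbar_locally m_infty) (locally la)).
  { apply (Hierarchy.filterlim_locally_cauchy F (F := Rbar_locally m_infty)).
    intros eps. destruct (exp_small (M / c) c eps Hc (cond_pos eps)) as [X [HX0 HX]].
    exists (fun x => x < - X). split. exists (- X). auto.
    intros u v Hu Hv. apply ball_R. unfold F. rewrite RInt_diff; auto.
    destruct (Rle_dec u v).
    - eapply Rle_lt_trans. apply (tail_neg f M c); auto. lra. replace (c * v) with (- c * - v) by ring. apply HX. lra.
    - rewrite RInt_swap_abs; auto. eapply Rle_lt_trans. apply (tail_neg f M c); auto. lra. lra.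
      replace (c * u) with (- c * - u) by ring. apply HX. lra. }
  destruct Lp as [lb Hlb]. destruct Lm as [la Hla].
  exists (lb - la). split.
  - apply is_RInt_gen_ext with (Derive F).
    + apply filter_forall. intros ab x _. apply is_derive_unique. apply HdF.
    + apply is_RInt_gen_Derive; auto.
      * apply filter_forall. intros ab x _. exists (f x). apply HdF.
      * apply filter_forall. intros ab x _. apply continuous_ext with f.
        intros t. symmetry. apply is_derive_unique. apply HdF. apply Hf.
  - assert (Hb : Rabs lb <= M / c).
    { apply lim_pinf_bound with F; auto. intros x Hx. unfold F.
      eapply Rle_trans. apply (tail_pos f M c); auto. lra. rewrite Rmult_0_r, exp_0. lra. }
    assert (Ha : Rabs la <= M / c).
    { apply lim_minf_bound with F; auto. intros x Hx. unfold F. rewrite RInt_swap_abs; auto.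
      eapply Rle_trans. apply (tail_neg f M c Hc Hf H x 0); try lra. rewrite Rmult_0_r, exp_0. lra. }
    pose proof (Rabs_triang lb (- la)). rewrite Rabs_Ropp in H0. unfold Rminus.
    replace (2 * M / c) with (M / c + M / c) by (field; lra). lra.
Qed.

Lemma mono_deriv (psi dpsi : R -> R) (y s : R) :
  (forall x, is_derive psi x (dpsi x)) -> (forall x, y <= x -> 0 <= dpsi x) -> y <= s -> psi y <= psi s.
Proof.
  intros Hd Hp Hys. destruct (Req_dec y s) as [E|E]. subst; lra.
  destruct (MVT_gen psi y s dpsi) as [c [Hc Heq]].
  - intros x _. apply Hd.
  - intros x _. apply continuity_pt_filterlim. apply (ex_derive_continuous psi). exists (dpsi x). apply Hd.
  - rewrite Rmin_left in Hc by lra. rewrite Rmax_right in Hc by lra.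
    assert (0 <= dpsi c) by (apply Hp; lra). nra.
Qed.

Lemma cmp_lemma (h : R -> R) (B beta : R) : 0 < beta ->
  (forall s, ex_derive h s) ->
  (forall s, 0 <= s -> Rabs (Derive h s) <= B * exp (- beta * s)) ->
  (forall eps, 0 < eps -> exists S, forall s, S <= s -> Rabs (h s) <= eps) ->
  forall y, 0 <= y -> Rabs (h y) <= B / beta * exp (- beta * y).
Proof.
  intros Hb Hd HB Hlim y Hy.
  assert (Hdr : forall x, is_derive (fun s => B / beta * exp (- beta * s)) x (- B * exp (- beta * x))).
  { intros x. auto_derive; auto. field. lra. }
  assert (K1 : forall s, y <= s -> h y - B / beta * exp (- beta * y) <= h s - B / beta * exp (- beta * s)).
  { intros s Hs. apply (mono_deriv (fun s => h s - B / beta * exp (- beta * s))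
      (fun x => Derive h x - - B * exp (- beta * x))); auto.
    intros x. apply (is_derive_minus h). apply Derive_correct. auto. apply Hdr.
    intros x Hx. specialize (HB x ltac:(lra)). pose proof (Rabs_pos (Derive h x)).
    unfold Rabs in HB. destruct Rcase_abs in HB; lra. }
  assert (K2 : forall s, y <= s -> - h y - B / beta * exp (- beta * y) <= - h s - B / beta * exp (- beta * s)).
  { intros s Hs. apply (mono_deriv (fun s => - h s - B / beta * exp (- beta * s))
      (fun x => - Derive h x - - B * exp (- beta * x))); auto.
    intros x. apply (is_derive_minus (fun s => - h s)). apply (is_derive_opp h). apply Derive_correct. auto. apply Hdr.
    intros x Hx. specialize (HB x ltac:(lra)). pose proof (Rabs_pos (Derive h x)).
    unfold Rabs in HB. destruct Rcase_abs in HB; lra. }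
  assert (Hpos : 0 <= B / beta * exp (- beta * y) + 0). 
  { pose proof (HB y Hy). pose proof (Rabs_pos (Derive h y)). pose proof (exp_pos (- beta * y)).
    assert (0 <= B) by nra. assert (0 <= B / beta) by (apply Rdiv_le_0_compat; lra). nra. }
  assert (U1 : h y <= B / beta * exp (- beta * y)).
  { apply Rle_plus_epsilon. intros eps He. destruct (Hlim eps He) as [S HS].
    set (s := Rmax y S). specialize (K1 s (Rmax_l _ _)). specialize (HS s (Rmax_r _ _)).
    pose proof (exp_pos (- beta * s)). assert (0 <= B / beta).
    { pose proof (HB y Hy). pose proof (Rabs_pos (Derive h y)). pose proof (exp_pos (- beta * y)).
      assert (0 <= B) by nra. apply Rdiv_le_0_compat; lra. }
    pose proof (Rle_abs (h s)). nra. }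
  assert (U2 : - h y <= B / beta * exp (- beta * y)).
  { apply Rle_plus_epsilon. intros eps He. destruct (Hlim eps He) as [S HS].
    set (s := Rmax y S). specialize (K2 s (Rmax_l _ _)). specialize (HS s (Rmax_r _ _)).
    pose proof (exp_pos (- beta * s)). assert (0 <= B / beta).
    { pose proof (HB y Hy). pose proof (Rabs_pos (Derive h y)). pose proof (exp_pos (- beta * y)).
      assert (0 <= B) by nra. apply Rdiv_le_0_compat; lra. }
    pose proof (Rle_abs (- h s)). rewrite Rabs_Ropp in H1. nra. }
  unfold Rabs. destruct Rcase_abs; lra.
Qed.

Definition qf (A y : R) : R := 16 / (1 + A * cosh_ (2 * y)) ^ 2.

Lemma cosh_pos y : 0 < cosh_ y.
Proof. unfold cosh_. pose proof (exp_pos y). pose proof (exp_pos (- y)). lra. Qed.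

Lemma cosh_ge1 y : 1 <= cosh_ y.
Proof.
  unfold cosh_. pose proof (exp_pos y). rewrite exp_Ropp.
  assert (exp y + / exp y - 2 = (exp y - 1)^2 / exp y) by (field; lra).
  assert (0 <= (exp y - 1)^2 / exp y) by (apply Rdiv_le_0_compat; [apply pow2_ge_0|lra]).
  lra.
Qed.

Lemma cosh_ge_exp y : exp (2 * Rabs y) / 2 <= cosh_ (2 * y).
Proof.
  unfold cosh_. pose proof (exp_pos (2*y)). pose proof (exp_pos (- (2*y))).
  unfold Rabs; destruct Rcase_abs.
  - replace (2 * - y) with (- (2 * y)) by ring. lra.
  - lra.
Qed.

Lemma exp_abs_sq y : exp (- (4) * Rabs y) * (exp (2 * Rabs y) * exp (2 * Rabs y)) = 1.
Proof. rewrite <- !exp_plus. replace (- (4) * Rabs y + (2 * Rabs y + 2 * Rabs y)) with 0 by ring. apply exp_0. Qed.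

Lemma exp_abs_ge1 c y : 0 <= c -> 1 <= exp (c * Rabs y).
Proof. intros Hc. rewrite <- exp_0. apply exp_le. pose proof (Rabs_pos y). nra. Qed.

Lemma Q_om_pow4 om y : 0 <= om -> Q_om om y ^ 4 = qf (a_om om) y.
Proof.
  intros Hom. unfold Q_om, qf.
  assert (HA : 0 <= a_om om) by (unfold a_om; apply sqrt_pos).
  pose proof (cosh_pos (2 * y)).
  assert (Hd : 0 < 1 + a_om om * cosh_ (2 * y)) by nra.
  assert (Hx : 0 <= 4 / (1 + a_om om * cosh_ (2 * y))) by (apply Rdiv_le_0_compat; lra).
  replace (sqrt (4 / (1 + a_om om * cosh_ (2 * y))) ^ 4) with
    ((sqrt (4 / (1 + a_om om * cosh_ (2 * y))) * sqrt (4 / (1 + a_om om * cosh_ (2 * y)))) ^ 2) by ring.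
  rewrite sqrt_sqrt by auto. field. lra.
Qed.

Lemma smooth_cosh2 : smooth (fun y => cosh_ (2 * y)).
Proof.
  apply smooth_ext with (fun y => / 2 * exp (2 * y) + / 2 * exp ((-2) * y)).
  intros t. unfold cosh_. replace (- (2 * t)) with ((-2) * t) by ring. field.
  apply smooth_plus; apply smooth_scal; apply smooth_exp_lin.
Qed.

Lemma smooth_qf A : 0 <= A -> smooth (qf A).
Proof.
  intros HA. apply smooth_ext with (fun y => 16 * / ((1 + A * cosh_ (2 * y)) * (1 + A * cosh_ (2 * y)))).
  intros t. unfold qf. unfold Rdiv. f_equal. f_equal. ring.
  apply smooth_scal. apply smooth_inv.
  assert (Hd : smooth (fun y => 1 + A * cosh_ (2 * y))).
  { apply (smooth_plus (fun _ => 1) (fun y => A * cosh_ (2 * y))). apply smooth_const.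
    apply (smooth_scal A (fun y => cosh_ (2 * y))). apply smooth_cosh2. }
  apply (smooth_mult (fun y => 1 + A * cosh_ (2 * y)) (fun y => 1 + A * cosh_ (2 * y))); exact Hd.
  intros y. pose proof (cosh_pos (2 * y)). assert (0 < 1 + A * cosh_ (2 * y)) by nra. nra.
Qed.

Lemma qf_bound A y : 1 <= A -> 0 <= qf A y <= 64 * exp (- (4) * Rabs y).
Proof.
  intros HA. unfold qf. pose proof (cosh_ge_exp y). pose proof (cosh_ge1 (2 * y)).
  pose proof (exp_abs_sq y). set (u := exp (2 * Rabs y)) in *. set (e := exp (- (4) * Rabs y)) in *.
  set (c := cosh_ (2 * y)) in *.
  assert (Hu : 0 < u) by apply exp_pos. assert (He : 0 < e) by apply exp_pos.
  assert (Hd : 1 <= 1 + A * c) by nra.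
  assert (Hd2 : 0 < (1 + A * c) ^ 2) by (apply pow_lt; lra).
  split. apply Rdiv_le_0_compat; lra.
  assert (Hu2 : u <= 2 * (1 + A * c)) by nra.
  assert (Hdd : u * u <= 4 * (1 + A * c) ^ 2) by (simpl; nra).
  assert (Hdd2 : e * (u * u) <= e * (4 * (1 + A * c) ^ 2)) by (apply Rmult_le_compat_l; lra).
  apply Rmult_le_reg_r with ((1 + A * c) ^ 2). lra.
  unfold Rdiv. rewrite Rmult_assoc, Rinv_l by lra. lra.
Qed.

Lemma qf_le16 A y : 1 <= A -> qf A y <= 16.
Proof.
  intros HA. unfold qf. pose proof (cosh_ge1 (2 * y)).
  set (c := cosh_ (2 * y)) in *.
  assert (Hd : 1 <= 1 + A * c) by nra.
  apply Rmult_le_reg_r with ((1 + A * c) ^ 2). nra.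
  unfold Rdiv. rewrite Rmult_assoc, Rinv_l by nra. nra.
Qed.

Lemma qf_deriv A y : 0 <= A ->
  is_derive (qf A) y (- 32 * A * ((exp (2 * y) - exp (- (2 * y))) / 2) * 2 / (1 + A * cosh_ (2 * y)) ^ 3).
Proof.
  intros HA. unfold qf, cosh_. pose proof (exp_pos (2*y)). pose proof (exp_pos (-(2*y))).
  assert (0 < 1 + A * ((exp (2 * y) + exp (- (2 * y))) / 2)) by nra.
  auto_derive. nra. field. lra.
Qed.

Lemma qf_deriv_bound A y : 1 <= A -> Rabs (Derive (qf A) y) <= 256 * exp (- (4) * Rabs y).
Proof.
  intros HA. rewrite (is_derive_unique _ _ _ (qf_deriv A y ltac:(lra))).
  pose proof (cosh_ge_exp y). pose proof (cosh_ge1 (2 * y)).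
  pose proof (exp_abs_sq y).
  assert (Hs : Rabs ((exp (2 * y) - exp (- (2 * y))) / 2) <= cosh_ (2 * y)).
  { unfold cosh_. pose proof (exp_pos (2*y)). pose proof (exp_pos (-(2*y))).
    unfold Rabs; destruct Rcase_abs; lra. }
  set (s := (exp (2 * y) - exp (- (2 * y))) / 2) in *.
  set (u := exp (2 * Rabs y)) in *. set (e := exp (- (4) * Rabs y)) in *.
  set (c := cosh_ (2 * y)) in *.
  assert (Hu : 0 < u) by apply exp_pos. assert (He : 0 < e) by apply exp_pos.
  set (d := 1 + A * c).
  assert (Hd : 1 <= d) by (unfold d; nra).
  assert (Hd3 : 0 < d ^ 3) by (apply pow_lt; lra).
  assert (E : - 32 * A * s * 2 / d ^ 3 = (- 64 * A) * s * / d ^ 3) by (field; lra).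
  rewrite E. rewrite !Rabs_mult. rewrite (Rabs_right (/ d ^ 3)) by (apply Rle_ge; left; apply Rinv_0_lt_compat; lra).
  rewrite (Rabs_left (-64)) by lra. rewrite (Rabs_right A) by lra.
  assert (Hb1 : - (-64) * A * Rabs s <= 64 * d) by (unfold d; nra).
  assert (Hu2 : u <= 2 * d) by (unfold d; nra).
  assert (Hdd : u * u <= 4 * d ^ 2) by (simpl; nra).
  assert (Hdd2 : e * (u * u) <= e * (4 * d ^ 2)) by (apply Rmult_le_compat_l; lra).
  apply Rmult_le_reg_r with (d ^ 3). lra.
  rewrite Rmult_assoc, Rinv_l by lra. rewrite Rmult_1_r.
  assert (H2 : 64 * d <= 256 * e * d ^ 3).
  { replace (256 * e * d ^ 3) with (64 * d * (e * (4 * d ^ 2))) by ring.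
    assert (1 <= e * (4 * d ^ 2)) by lra.
    assert (0 <= 64 * d) by lra. nra. }
  lra.
Qed.

Lemma qf_diff_bound A y : 1 <= A <= 2 -> Rabs (qf A y - qf 1 y) <= 320 * (A - 1) * exp (- (4) * Rabs y).
Proof.
  intros HA. unfold qf.
  pose proof (cosh_ge_exp y). pose proof (cosh_ge1 (2 * y)).
  pose proof (exp_abs_sq y).
  set (u := exp (2 * Rabs y)) in *. set (e := exp (- (4) * Rabs y)) in *.
  set (c := cosh_ (2 * y)) in *.
  assert (Hu : 0 < u) by apply exp_pos. assert (He : 0 < e) by apply exp_pos.
  set (d1 := 1 + A * c). set (d0 := 1 + 1 * c).
  assert (Hd1 : 1 <= d1) by (unfold d1; nra). assert (Hd0 : 1 <= d0) by (unfold d0; nra).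
  assert (Hcd : c <= d0) by (unfold d0; lra). assert (Hd10 : d0 <= d1) by (unfold d0, d1; nra).
  assert (Hp : 0 < d1 ^ 2 * d0 ^ 2) by (apply Rmult_lt_0_compat; apply pow_lt; lra).
  assert (E : 16 / d1 ^ 2 - 16 / d0 ^ 2 = - (16 * ((A - 1) * c * (d1 + d0))) * / (d1 ^ 2 * d0 ^ 2))
    by (unfold d1, d0 in *; field; repeat split; nra).
  rewrite E. rewrite Rabs_mult, Rabs_Ropp.
  assert (Hn : 0 <= 16 * ((A - 1) * c * (d1 + d0))).
  { assert (0 <= (A - 1) * c) by (apply Rmult_le_pos; lra). assert (0 <= d1 + d0) by lra.
    assert (0 <= (A - 1) * c * (d1 + d0)) by (apply Rmult_le_pos; lra). lra. }
  rewrite (Rabs_right _ (Rle_ge _ _ Hn)). rewrite Rabs_right by (apply Rle_ge; left; apply Rinv_0_lt_compat; lra).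
  apply Rmult_le_reg_r with (d1 ^ 2 * d0 ^ 2). lra.
  rewrite Rmult_assoc, Rinv_l by lra. rewrite Rmult_1_r.
  assert (K1 : (A - 1) * c * (d1 + d0) <= (A - 1) * (2 * d1 * d0)).
  { rewrite Rmult_assoc. apply Rmult_le_compat_l. lra. assert (c * (d1 + d0) <= d0 * (2 * d1)).
    { apply Rle_trans with (d0 * (d1 + d0)). apply Rmult_le_compat_r; lra. apply Rmult_le_compat_l; lra. }
    lra. }
  assert (K2 : u * u <= 4 * (d1 * d0)).
  { assert (u <= 2 * d0) by lra. assert (u <= 2 * d1) by lra.
    assert (u * u <= (2 * d1) * (2 * d0)) by (apply Rmult_le_compat; lra). lra. }
  assert (K3 : 1 <= 4 * e * (d1 * d0)).
  { assert (e * (u * u) <= e * (4 * (d1 * d0))) by (apply Rmult_le_compat_l; lra). lra. }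
  assert (K4 : 0 <= A - 1) by lra.
  assert (K5 : (A - 1) * (2 * d1 * d0) <= (A - 1) * (2 * d1 * d0) * (4 * e * (d1 * d0))).
  { assert (0 <= (A - 1) * (2 * d1 * d0)) by (apply Rmult_le_pos; [lra|]; assert (0 <= d1 * d0) by nra; lra).
    nra. }
  assert (K6 : (A - 1) * (2 * d1 * d0) * (4 * e * (d1 * d0)) = 8 * (A - 1) * e * (d1 ^ 2 * d0 ^ 2)) by ring.
  assert (K7 : 0 <= (A - 1) * e * (d1 ^ 2 * d0 ^ 2)).
  { apply Rmult_le_pos; [apply Rmult_le_pos|]; lra. }
  lra.
Qed.

Definition tnh (y : R) := (exp (2 * y) - 1) / (exp (2 * y) + 1).
Definition F0 (y : R) := 4 * tnh y - 4 / 3 * tnh y ^ 3.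

Lemma F0_deriv y : is_derive F0 y (qf 1 y).
Proof.
  unfold F0, tnh, qf, cosh_. pose proof (exp_pos (2 * y)).
  auto_derive. lra.
  rewrite exp_Ropp. field. repeat split; nra.
Qed.

Lemma tnh_bound y : Rabs (tnh y) <= 1.
Proof.
  unfold tnh. pose proof (exp_pos (2 * y)). unfold Rabs; destruct Rcase_abs.
  apply Rmult_le_reg_r with (exp (2 * y) + 1). lra.
  replace (- ((exp (2 * y) - 1) / (exp (2 * y) + 1)) * (exp (2 * y) + 1)) with (1 - exp (2 * y)) by (field; lra). lra.
  apply Rmult_le_reg_r with (exp (2 * y) + 1). lra.
  replace ((exp (2 * y) - 1) / (exp (2 * y) + 1) * (exp (2 * y) + 1)) with (exp (2 * y) - 1) by (field; lra). lra.
Qed.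

Lemma F0_close (y l : R) : Rabs l = 1 -> Rabs (F0 y - 4 * l + 4 / 3 * l ^ 3) <= 8 * Rabs (tnh y - l).
Proof.
  intros Hl. unfold F0. set (t := tnh y). pose proof (tnh_bound y). fold t in H.
  replace (4 * t - 4 / 3 * t ^ 3 - 4 * l + 4 / 3 * l ^ 3) with ((t - l) * (4 - 4 / 3 * (t * t + t * l + l * l))) by ring.
  rewrite Rabs_mult. rewrite Rmult_comm. apply Rmult_le_compat_r. apply Rabs_pos.
  assert (Rabs (t * t + t * l + l * l) <= 3).
  { eapply Rle_trans. apply Rabs_triang. eapply Rle_trans. apply Rplus_le_compat_r. apply Rabs_triang.
    rewrite !Rabs_mult. rewrite Hl. pose proof (Rabs_pos t). nra. }
  eapply Rle_trans. apply Rabs_triang. rewrite Rabs_Ropp, Rabs_mult. 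
  rewrite (Rabs_right 4) by lra. rewrite (Rabs_right (4/3)) by lra. lra.
Qed.

Lemma q0_integral : is_RInt_gen (qf 1) (Rbar_locally m_infty) (Rbar_locally p_infty) (16 / 3).
Proof.
  apply is_RInt_gen_ext with (Derive F0).
  apply filter_forall. intros ab x _. apply is_derive_unique. apply F0_deriv.
  replace (16 / 3) with (8 / 3 - (- (8 / 3))) by field.
  apply is_RInt_gen_Derive.
  - apply filter_forall. intros ab x _. exists (qf 1 x). apply F0_deriv.
  - apply filter_forall. intros ab x _. apply continuous_ext with (qf 1).
    intros t. symmetry. apply is_derive_unique. apply F0_deriv.
    apply (smooth_continuous (qf 1) 0). apply smooth_qf. lra.
  - apply (lim_minf F0 (- (8/3)) 16 2). lra. intros y Hy.
    replace (F0 y - - (8 / 3)) with (F0 y - 4 * (-1) + 4 / 3 * (-1) ^ 3) by (simpl; lra).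
    eapply Rle_trans. apply F0_close. unfold Rabs; destruct Rcase_abs; lra.
    unfold tnh. pose proof (exp_pos (2 * y)).
    replace ((exp (2 * y) - 1) / (exp (2 * y) + 1) - -1) with (2 * exp (2 * y) / (exp (2 * y) + 1)) by (field; lra).
    rewrite Rabs_right. 2: { apply Rle_ge. apply Rdiv_le_0_compat; lra. }
    apply Rle_trans with (8 * (2 * exp (2 * y))). apply Rmult_le_compat_l. lra.
    apply Rmult_le_reg_r with (exp (2 * y) + 1). lra.
    replace (2 * exp (2 * y) / (exp (2 * y) + 1) * (exp (2 * y) + 1)) with (2 * exp (2 * y)) by (field; lra). nra.
    lra.
  - apply (lim_pinf F0 (8/3) 16 2). lra. intros y Hy.
    replace (F0 y - 8 / 3) with (F0 y - 4 * 1 + 4 / 3 * 1 ^ 3) by (simpl; lra).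
    eapply Rle_trans. apply F0_close. rewrite Rabs_R1. auto.
    unfold tnh. pose proof (exp_pos (2 * y)). pose proof (exp_pos (- 2 * y)).
    replace ((exp (2 * y) - 1) / (exp (2 * y) + 1) - 1) with (- (2 / (exp (2 * y) + 1))) by (field; lra).
    rewrite Rabs_Ropp. rewrite Rabs_right. 2: { apply Rle_ge. apply Rdiv_le_0_compat; lra. }
    apply Rle_trans with (8 * (2 * exp (- 2 * y))). apply Rmult_le_compat_l. lra.
    assert (E : exp (- 2 * y) * exp (2 * y) = 1) by (rewrite <- exp_plus; replace (- 2 * y + 2 * y) with 0 by ring; apply exp_0).
    apply Rmult_le_reg_r with (exp (2 * y) + 1). lra.
    replace (2 / (exp (2 * y) + 1) * (exp (2 * y) + 1)) with 2 by (field; lra). nra.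
    replace (- (2) * y) with (- 2 * y) by ring. lra.
Qed.

Lemma a_om_bounds om : 0 <= om <= 3 / 8 -> 1 <= a_om om <= 2 /\ a_om om - 1 <= 8 / 3 * om.
Proof.
  intros Hom. unfold a_om.
  assert (H1 : 1 <= sqrt (1 + 16 / 3 * om)).
  { pose proof (sqrt_le_1_alt 1 (1 + 16 / 3 * om) ltac:(lra)) as X. rewrite sqrt_1 in X. exact X. }
  assert (H2 : sqrt (1 + 16 / 3 * om) <= 1 + 8 / 3 * om).
  { pose proof (sqrt_le_1_alt (1 + 16 / 3 * om) ((1 + 8 / 3 * om) ^ 2) ltac:(nra)) as X.
    rewrite sqrt_pow2 in X by lra. exact X. }
  lra.
Qed.

Record Setting (om a C0 C1 : R) (W1 W2 K2 K1 K0 : R -> R) : Prop := {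
  s_om : 0 < om;
  s_om_small : om <= 1 / 8;
  s_C0om : C0 * om <= 1 / 8;
  s_C0 : 0 <= C0;
  s_C1 : 0 <= C1;
  s_a : 0 < a;
  s_a_close : Rabs (a - 8 / 9 * om) <= C0 * om ^ 2;
  s_W1 : smooth W1;
  s_W2 : smooth W2;
  s_even : forall y, W2 (- y) = W2 y;
  s_ode : forall y, M_minus_op om W2 y = (1 - a ^ 2) * W1 y;
  s_W2d : forall y, Rabs (Derive_n W2 1 y) <= C1 * (om ^ 1 * exp (- a * Rabs y) + om * exp (- Rabs y));
  s_diff0 : forall y, Rabs (Derive_n (fun z => W1 z - W2 z) 0 y) <= C0 * (om * exp (- sqrt (2 - a ^ 2) * Rabs y));
  s_diff1 : forall y, Rabs (Derive_n (fun z => W1 z - W2 z) 1 y) <= C1 * (om * exp (- sqrt (2 - a ^ 2) * Rabs y));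
  s_W2close : forall y, Rabs (W2 y - exp (- a * Rabs y)) <= C0 * (om * exp (- a * Rabs y));
  s_K2 : smooth K2;
  s_K1 : smooth K1;
  s_K0 : smooth K0;
  s_int : forall f : R -> R, smooth f -> forall y : R,
        Uop W2 (M_plus_op om (M_minus_op om f)) y = Kop K2 K1 K0 (Uop W2 f) y;
  s_Kb2 : forall y, Rabs (Derive_n K2 0 y) <= C0 * (om * exp (- (sqrt (2 - a ^ 2) - a) * Rabs y));
  s_Kb1 : forall y, Rabs (Derive_n K1 0 y) <= C0 * (om * exp (- (sqrt (2 - a ^ 2) - a) * Rabs y));
  s_Kb0 : forall y, Rabs (Derive_n K0 0 y) <= C0 * (om * exp (- (sqrt (2 - a ^ 2) - a) * Rabs y));
  s_Kb2' : forall y, Rabs (Derive_n K2 1 y) <= C1 * (om * exp (- (sqrt (2 - a ^ 2) - a) * Rabs y))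
}.

Lemma exp_mono_abs (c1 c2 y : R) : c1 <= c2 -> exp (- c2 * Rabs y) <= exp (- c1 * Rabs y).
Proof. intros H. apply exp_le. pose proof (Rabs_pos y). nra. Qed.


Definition qA (om : R) := qf (a_om om).

Lemma S_num om a C0 C1 W1 W2 K2 K1 K0 (S : Setting om a C0 C1 W1 W2 K2 K1 K0) :
  a <= 2 * om /\ a <= 1 / 4 /\ 5 / 4 <= sqrt (2 - a ^ 2) <= 3 / 2 /\ 0 <= 1 - a ^ 2 <= 1 /\
  1 <= sqrt (2 - a ^ 2) - a.
Proof.
  pose proof (s_om _ _ _ _ _ _ _ _ _ S). pose proof (s_om_small _ _ _ _ _ _ _ _ _ S).
  pose proof (s_C0om _ _ _ _ _ _ _ _ _ S). pose proof (s_a _ _ _ _ _ _ _ _ _ S).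
  pose proof (s_a_close _ _ _ _ _ _ _ _ _ S). pose proof (s_C0 _ _ _ _ _ _ _ _ _ S).
  assert (Ha : a <= 8 / 9 * om + C0 * om ^ 2) by (pose proof (Rle_abs (a - 8/9*om)); lra).
  assert (Ha2 : a <= 2 * om) by nra.
  assert (Ha4 : a <= 1 / 4) by lra.
  assert (Hk1 : 5 / 4 <= sqrt (2 - a ^ 2)).
  { pose proof (sqrt_le_1_alt ((5/4)^2) (2 - a ^ 2) ltac:(nra)) as X. rewrite sqrt_pow2 in X by lra. exact X. }
  assert (Hk2 : sqrt (2 - a ^ 2) <= 3 / 2).
  { pose proof (sqrt_le_1_alt (2 - a ^ 2) ((3/2)^2) ltac:(nra)) as X. rewrite sqrt_pow2 in X by lra. exact X. }
  repeat split; try lra; nra.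
Qed.

Ltac getS S := 
  pose proof (s_om _ _ _ _ _ _ _ _ _ S); pose proof (s_om_small _ _ _ _ _ _ _ _ _ S);
  pose proof (s_C0om _ _ _ _ _ _ _ _ _ S); pose proof (s_a _ _ _ _ _ _ _ _ _ S);
  pose proof (s_C0 _ _ _ _ _ _ _ _ _ S); pose proof (s_C1 _ _ _ _ _ _ _ _ _ S);
  pose proof (S_num _ _ _ _ _ _ _ _ _ S).

Lemma S_W2 om a C0 C1 W1 W2 K2 K1 K0 (S : Setting om a C0 C1 W1 W2 K2 K1 K0) y :
  7 / 8 * exp (- a * Rabs y) <= W2 y <= 9 / 8 * exp (- a * Rabs y).
Proof.
  getS S. pose proof (s_W2close _ _ _ _ _ _ _ _ _ S y).
  pose proof (exp_pos (- a * Rabs y)) as He.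
  assert (X : C0 * om * exp (- a * Rabs y) <= 1/8 * exp (- a * Rabs y)) by (apply Rmult_le_compat_r; lra).
  rewrite <- Rmult_assoc in H6.
  pose proof (Rle_abs (W2 y - exp (- a * Rabs y))). pose proof (Rle_abs (- (W2 y - exp (- a * Rabs y)))). rewrite Rabs_Ropp in H8. split; lra.
Qed.

Lemma S_W2pos om a C0 C1 W1 W2 K2 K1 K0 (S : Setting om a C0 C1 W1 W2 K2 K1 K0) y : 0 < W2 y.
Proof. pose proof (S_W2 _ _ _ _ _ _ _ _ _ S y). pose proof (exp_pos (- a * Rabs y)). lra. Qed.

Lemma S_W2d om a C0 C1 W1 W2 K2 K1 K0 (S : Setting om a C0 C1 W1 W2 K2 K1 K0) y :
  Rabs (Derive W2 y) <= 2 * C1 * om * exp (- a * Rabs y).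
Proof.
  getS S. pose proof (s_W2d _ _ _ _ _ _ _ _ _ S y). change (Derive_n W2 1 y) with (Derive W2 y) in H6. rewrite pow_1 in H6.
  assert (exp (- Rabs y) <= exp (- a * Rabs y)).
  { replace (- Rabs y) with (- (1) * Rabs y) by ring. apply exp_mono_abs. lra. }
  change (Derive_n W2 1 y) with (Derive W2 y) in H6.
  assert (C1 * (om * exp (- a * Rabs y) + om * exp (- Rabs y)) <= C1 * (2 * om * exp (- a * Rabs y))).
  { apply Rmult_le_compat_l. lra. nra. }
  replace (2 * C1 * om * exp (- a * Rabs y)) with (C1 * (2 * om * exp (- a * Rabs y))) by ring. lra.
Qed.

Lemma S_w om a C0 C1 W1 W2 K2 K1 K0 (S : Setting om a C0 C1 W1 W2 K2 K1 K0) y :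
  Rabs (wf W2 y) <= 3 * C1 * om.
Proof.
  getS S. pose proof (S_W2d _ _ _ _ _ _ _ _ _ S y). pose proof (S_W2 _ _ _ _ _ _ _ _ _ S y).
  pose proof (exp_pos (- a * Rabs y)).
  unfold wf, Rdiv. rewrite Rabs_mult. rewrite Rabs_Rinv by lra. rewrite (Rabs_right (W2 y)) by lra.
  apply Rmult_le_reg_r with (W2 y). lra. rewrite Rmult_assoc, Rinv_l by lra. rewrite Rmult_1_r.
  assert (0 <= C1 * om) by nra.
  nra.
Qed.

Lemma S_q om a C0 C1 W1 W2 K2 K1 K0 (S : Setting om a C0 C1 W1 W2 K2 K1 K0) :
  (forall y, Q_om om y ^ 4 = qA om y) /\ smooth (qA om) /\
  (forall y, 0 <= qA om y <= 64 * exp (- (4) * Rabs y)) /\ (forall y, qA om y <= 16) /\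
  (forall y, Rabs (Derive (qA om) y) <= 256 * exp (- (4) * Rabs y)) /\
  (forall y, Rabs (qA om y - qf 1 y) <= 320 * (8 / 3 * om) * exp (- (4) * Rabs y)).
Proof.
  getS S. pose proof (a_om_bounds om ltac:(lra)) as [HA1 HA2].
  unfold qA. split; [|split; [|split; [|split; [|split]]]].
  - intros y. apply Q_om_pow4. lra.
  - apply smooth_qf. lra.
  - intros y. apply qf_bound. lra.
  - intros y. apply qf_le16. lra.
  - intros y. apply qf_deriv_bound. lra.
  - intros y. eapply Rle_trans. apply qf_diff_bound. lra.
    pose proof (exp_pos (- (4) * Rabs y)). 
    apply Rmult_le_compat_r. lra. lra.
Qed.

Lemma S_W2dd om a C0 C1 W1 W2 K2 K1 K0 (S : Setting om a C0 C1 W1 W2 K2 K1 K0) y :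
  Derive_n W2 2 y = W2 y - om * qA om y * W2 y - (1 - a ^ 2) * W1 y.
Proof.
  pose proof (s_ode _ _ _ _ _ _ _ _ _ S y). destruct (S_q _ _ _ _ _ _ _ _ _ S) as [Hq _].
  unfold M_minus_op in H. rewrite Hq in H. lra.
Qed.

Lemma exp_split (k a y : R) : exp (- k * Rabs y) = exp (- (k - a) * Rabs y) * exp (- a * Rabs y).
Proof. rewrite <- exp_plus. f_equal. ring. Qed.

Lemma exp_4_1 y : exp (- (4) * Rabs y) <= exp (- Rabs y).
Proof. replace (- Rabs y) with (- (1) * Rabs y) by ring. apply exp_mono_abs. lra. Qed.

Lemma S_ka om a C0 C1 W1 W2 K2 K1 K0 (S : Setting om a C0 C1 W1 W2 K2 K1 K0) y :
  exp (- (sqrt (2 - a ^ 2) - a) * Rabs y) <= exp (- Rabs y).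
Proof.
  getS S. replace (- Rabs y) with (- (1) * Rabs y) by ring. apply exp_mono_abs. lra.
Qed.

Lemma S_wd om a C0 C1 W1 W2 K2 K1 K0 (S : Setting om a C0 C1 W1 W2 K2 K1 K0) t :
  Derive (wf W2) t = (1 - om * qA om t - (1 - a ^ 2) * W1 t / W2 t) - wf W2 t * wf W2 t.
Proof.
  pose proof (S_W2pos _ _ _ _ _ _ _ _ _ S t) as Hp.
  pose proof (s_W2 _ _ _ _ _ _ _ _ _ S) as HW.
  unfold wf. unfold Rdiv at 1.
  rewrite (Derive_mult (Derive W2) (fun y => / W2 y)).
  rewrite Derive_inv. change (Derive (Derive W2) t) with (Derive_n W2 2 t).
  rewrite (S_W2dd _ _ _ _ _ _ _ _ _ S t). field. lra.
  apply (HW 0%nat). lra. apply (HW 1%nat). apply ex_derive_inv. apply (HW 0%nat). lra.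
Qed.

Lemma S_ex_derive_W om a C0 C1 W1 W2 K2 K1 K0 (S : Setting om a C0 C1 W1 W2 K2 K1 K0) t :
  ex_derive W1 t /\ ex_derive W2 t /\ ex_derive (qA om) t.
Proof.
  split. apply (s_W1 _ _ _ _ _ _ _ _ _ S 0%nat). split. apply (s_W2 _ _ _ _ _ _ _ _ _ S 0%nat).
  destruct (S_q _ _ _ _ _ _ _ _ _ S) as [_ [Hq _]]. apply (Hq 0%nat).
Qed.

Lemma S_smooth_w om a C0 C1 W1 W2 K2 K1 K0 (S : Setting om a C0 C1 W1 W2 K2 K1 K0) : smooth (wf W2).
Proof.
  apply smooth_wf. apply (s_W2 _ _ _ _ _ _ _ _ _ S). intros y. pose proof (S_W2pos _ _ _ _ _ _ _ _ _ S y). lra.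
Qed.

Lemma S_wdd om a C0 C1 W1 W2 K2 K1 K0 (S : Setting om a C0 C1 W1 W2 K2 K1 K0) t :
  Derive_n (wf W2) 2 t = (- om * Derive (qA om) t
     - (1 - a ^ 2) * (Derive W1 t * W2 t - W1 t * Derive W2 t) / (W2 t) ^ 2)
     - 2 * wf W2 t * Derive (wf W2) t.
Proof.
  pose proof (S_W2pos _ _ _ _ _ _ _ _ _ S t) as Hp.
  destruct (S_ex_derive_W _ _ _ _ _ _ _ _ _ S t) as [E1 [E2 E3]].
  pose proof (S_smooth_w _ _ _ _ _ _ _ _ _ S) as Hw.
  change (Derive_n (wf W2) 2 t) with (Derive (Derive_n (wf W2) 1) t).
  rewrite (Derive_ext (Derive_n (wf W2) 1) (fun t => (1 - om * qA om t - (1 - a ^ 2) * W1 t / W2 t) - wf W2 t * wf W2 t)).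
  2: { intros x. rewrite Derive_n_1. apply (S_wd _ _ _ _ _ _ _ _ _ S). }
  apply is_derive_unique.
  assert (Hw0 : ex_derive (wf W2) t) by (apply (Hw 0%nat)).
  auto_derive. repeat split; auto. lra. change (fun x : R => qA om x) with (qA om). change (fun x : R => W1 x) with W1. change (fun x : R => W2 x) with W2. change (fun x : R => wf W2 x) with (wf W2). field. lra.
Qed.

Lemma div_bound (X W B e : R) : 0 < e -> 7 / 8 * e <= W -> Rabs X <= B * e -> Rabs (X / W) <= 8 / 7 * B.
Proof.
  intros He HW HX. assert (0 < W) by lra. unfold Rdiv. rewrite Rabs_mult, Rabs_Rinv by lra.
  rewrite (Rabs_right W) by lra. apply Rmult_le_reg_r with W. lra.
  rewrite Rmult_assoc, Rinv_l by lra. rewrite Rmult_1_r.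
  assert (0 <= B) by (pose proof (Rabs_pos X); nra). nra.
Qed.

Lemma S_diff0' om a C0 C1 W1 W2 K2 K1 K0 (S : Setting om a C0 C1 W1 W2 K2 K1 K0) t :
  Rabs (W2 t - W1 t) <= C0 * om * exp (- (sqrt (2 - a ^ 2) - a) * Rabs t) * exp (- a * Rabs t).
Proof.
  pose proof (s_diff0 _ _ _ _ _ _ _ _ _ S t) as H.
  change (Derive_n (fun z => W1 z - W2 z) 0 t) with (W1 t - W2 t) in H. rewrite Rabs_minus_sym.
  rewrite (exp_split _ a) in H. eapply Rle_trans; [exact H| right; ring].
Qed.

Lemma S_diff1' om a C0 C1 W1 W2 K2 K1 K0 (S : Setting om a C0 C1 W1 W2 K2 K1 K0) t :
  Rabs (Derive W1 t - Derive W2 t) <= C1 * om * exp (- (sqrt (2 - a ^ 2) - a) * Rabs t) * exp (- a * Rabs t).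
Proof.
  pose proof (s_diff1 _ _ _ _ _ _ _ _ _ S t) as H. 
  change (Derive_n (fun z : R => W1 z - W2 z) 1 t) with (Derive (fun z : R => W1 z - W2 z) t) in H.
  destruct (S_ex_derive_W _ _ _ _ _ _ _ _ _ S t) as [E1 [E2 E3]].
  rewrite (Derive_minus W1 W2) in H by auto.
  rewrite (exp_split _ a) in H. eapply Rle_trans; [exact H| right; ring].
Qed.

Lemma S_eps om a C0 C1 W1 W2 K2 K1 K0 (S : Setting om a C0 C1 W1 W2 K2 K1 K0) t :
  Rabs (Derive (wf W2) t - (a ^ 2 - wf W2 t * wf W2 t)) <= (2 * C0 + 64) * om * exp (- Rabs t).
Proof.
  getS S. rewrite (S_wd _ _ _ _ _ _ _ _ _ S t).
  pose proof (S_W2pos _ _ _ _ _ _ _ _ _ S t) as Hp.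
  pose proof (S_W2 _ _ _ _ _ _ _ _ _ S t) as HW.
  destruct (S_q _ _ _ _ _ _ _ _ _ S) as [_ [_ [Hq _]]].
  pose proof (Hq t) as Hqt.
  pose proof (exp_pos (- a * Rabs t)) as Hea.
  pose proof (S_ka _ _ _ _ _ _ _ _ _ S t) as Hka.
  pose proof (exp_4_1 t) as H41.
  replace (1 - om * qA om t - (1 - a ^ 2) * W1 t / W2 t - wf W2 t * wf W2 t - (a ^ 2 - wf W2 t * wf W2 t))
    with ((1 - a ^ 2) * ((W2 t - W1 t) / W2 t) - om * qA om t) by (field; lra).
  eapply Rle_trans. apply Rabs_triang. rewrite Rabs_Ropp. rewrite !Rabs_mult.
  assert (Hd := div_bound (W2 t - W1 t) (W2 t) (C0 * om * exp (- (sqrt (2 - a ^ 2) - a) * Rabs t)) _ Hea (proj1 HW)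
    (S_diff0' _ _ _ _ _ _ _ _ _ S t)).
  destruct H5 as [_ [_ [_ [Hlam _]]]].
  rewrite (Rabs_right (1 - a ^ 2)) by lra. rewrite (Rabs_right om) by lra. rewrite (Rabs_right (qA om t)) by lra.
  assert (X1 : (1 - a ^ 2) * Rabs ((W2 t - W1 t) / W2 t) <= 8 / 7 * (C0 * om * exp (- Rabs t))).
  { apply Rle_trans with (1 * Rabs ((W2 t - W1 t) / W2 t)). apply Rmult_le_compat_r. apply Rabs_pos. lra.
    rewrite Rmult_1_l. eapply Rle_trans. exact Hd. apply Rmult_le_compat_l. lra.
    apply Rmult_le_compat_l. nra. exact Hka. }
  assert (X2 : om * qA om t <= om * (64 * exp (- Rabs t))).
  { apply Rmult_le_compat_l. lra. nra. }
  pose proof (exp_pos (- Rabs t)). assert (0 <= C0 * om * exp (- Rabs t)) by (apply Rmult_le_pos; nra). lra.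
Qed.

Lemma S_wd_bound om a C0 C1 W1 W2 K2 K1 K0 (S : Setting om a C0 C1 W1 W2 K2 K1 K0) t :
  Rabs (Derive (wf W2) t) <= (65 + 2 * C0 + 2 * C1 ^ 2) * om.
Proof.
  getS S. pose proof (S_eps _ _ _ _ _ _ _ _ _ S t) as He.
  pose proof (S_w _ _ _ _ _ _ _ _ _ S t) as Hw.
  assert (Hel : exp (- Rabs t) <= 1).
  { rewrite <- exp_0. apply exp_le. pose proof (Rabs_pos t); lra. }
  pose proof (exp_pos (- Rabs t)).
  set (w := wf W2 t) in *. set (d := Derive (wf W2) t) in *.
  assert (Hw2 : w * w <= 9 * C1 ^ 2 * om ^ 2).
  { assert (Rabs w * Rabs w <= (3 * C1 * om) * (3 * C1 * om)) by (apply Rmult_le_compat; try apply Rabs_pos; lra).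
    rewrite <- Rabs_mult in H7. pose proof (Rle_abs (w * w)). nra. }
  assert (Hw3 : 0 <= w * w) by nra.
  destruct H5 as [Ha2 _].
  assert (Ha3 : a ^ 2 <= 4 * om ^ 2) by nra.
  assert (X : Rabs d <= Rabs (d - (a ^ 2 - w * w)) + Rabs (a ^ 2 - w * w)).
  { replace d with ((d - (a ^ 2 - w * w)) + (a ^ 2 - w * w)) at 1 by ring. apply Rabs_triang. }
  assert (Y : Rabs (a ^ 2 - w * w) <= 4 * om ^ 2 + 9 * C1 ^ 2 * om ^ 2).
  { unfold Rabs at 1. destruct Rcase_abs; nra. }
  assert (Z : (2 * C0 + 64) * om * exp (- Rabs t) <= (2 * C0 + 64) * om).
  { rewrite <- (Rmult_1_r ((2 * C0 + 64) * om)) at 2. apply Rmult_le_compat_l. nra. lra. }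
  assert (4 * om ^ 2 <= om) by nra. assert (9 * C1 ^ 2 * om ^ 2 <= 2 * C1 ^ 2 * om) by nra.
  nra.
Qed.

Lemma S_wdd_bound om a C0 C1 W1 W2 K2 K1 K0 (S : Setting om a C0 C1 W1 W2 K2 K1 K0) t :
  Rabs (Derive_n (wf W2) 2 t + 2 * wf W2 t * Derive (wf W2) t) <= (256 + 4 * C1) * om * exp (- Rabs t).
Proof.
  getS S. rewrite (S_wdd _ _ _ _ _ _ _ _ _ S t).
  pose proof (S_W2pos _ _ _ _ _ _ _ _ _ S t) as Hp.
  pose proof (S_W2 _ _ _ _ _ _ _ _ _ S t) as HW.
  destruct (S_q _ _ _ _ _ _ _ _ _ S) as [_ [_ [_ [_ [Hq' _]]]]].
  pose proof (Hq' t) as Hqt.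
  pose proof (exp_pos (- a * Rabs t)) as Hea.
  pose proof (S_ka _ _ _ _ _ _ _ _ _ S t) as Hka.
  pose proof (exp_4_1 t) as H41.
  pose proof (S_diff0' _ _ _ _ _ _ _ _ _ S t) as D0.
  pose proof (S_diff1' _ _ _ _ _ _ _ _ _ S t) as D1.
  pose proof (S_W2d _ _ _ _ _ _ _ _ _ S t) as Wd.
  set (ek := exp (- (sqrt (2 - a ^ 2) - a) * Rabs t)) in *.
  set (ea := exp (- a * Rabs t)) in *.
  assert (Hek : 0 < ek) by apply exp_pos.
  assert (N : Rabs (Derive W1 t * W2 t - W1 t * Derive W2 t) <= (3 * C1 * om * ek) * ea * ea).
  { replace (Derive W1 t * W2 t - W1 t * Derive W2 t) with
      ((Derive W1 t - Derive W2 t) * W2 t + (W2 t - W1 t) * Derive W2 t) by ring.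
    eapply Rle_trans. apply Rabs_triang. rewrite !Rabs_mult. rewrite (Rabs_right (W2 t)) by lra.
    assert (A1 : Rabs (Derive W1 t - Derive W2 t) * W2 t <= (C1 * om * ek * ea) * (9 / 8 * ea)).
    { apply Rmult_le_compat; try lra. apply Rabs_pos. }
    assert (A2 : Rabs (W2 t - W1 t) * Rabs (Derive W2 t) <= (C0 * om * ek * ea) * (2 * C1 * om * ea)).
    { apply Rmult_le_compat; try apply Rabs_pos; lra. }
    assert (A3 : (C0 * om * ek * ea) * (2 * C1 * om * ea) <= (C1 / 4 * om * ek) * ea * ea).
    { replace ((C0 * om * ek * ea) * (2 * C1 * om * ea)) with ((C0 * om) * (2 * C1 * om * ek * ea * ea)) by ring.
      replace ((C1 / 4 * om * ek) * ea * ea) with (1 / 8 * (2 * C1 * om * ek * ea * ea)) by field.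
      apply Rmult_le_compat_r. assert (0 <= C1 * om * ek) by (apply Rmult_le_pos; nra). 
      assert (0 <= ea * ea) by nra. nra. lra. }
    assert (A4 : (C1 * om * ek * ea) * (9 / 8 * ea) = (9 / 8 * C1 * om * ek) * ea * ea) by ring.
    assert (0 <= C1 * om * ek * ea * ea) by (repeat apply Rmult_le_pos; nra).
    nra. }
  assert (Hd1 := div_bound _ (W2 t) _ _ Hea (proj1 HW) N).
  assert (N2 : Rabs ((Derive W1 t * W2 t - W1 t * Derive W2 t) / W2 t) <= (8 / 7 * (3 * C1 * om * ek)) * ea).
  { eapply Rle_trans; [exact Hd1| right; ring]. }
  assert (Hd2 := div_bound _ (W2 t) _ _ Hea (proj1 HW) N2).
  replace (- om * Derive (qA om) t -
    (1 - a ^ 2) * (Derive W1 t * W2 t - W1 t * Derive W2 t) / W2 t ^ 2 -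
    2 * wf W2 t * Derive (wf W2) t + 2 * wf W2 t * Derive (wf W2) t)
    with (- (om * Derive (qA om) t) - (1 - a ^ 2) * ((Derive W1 t * W2 t - W1 t * Derive W2 t) / W2 t / W2 t)) by (field; lra).
  destruct H5 as [_ [_ [_ [Hlam _]]]].
  eapply Rle_trans. apply (Rabs_triang (- (om * Derive (qA om) t)) (- ((1 - a ^ 2) * ((Derive W1 t * W2 t - W1 t * Derive W2 t) / W2 t / W2 t)))). rewrite !Rabs_Ropp, !Rabs_mult.
  rewrite (Rabs_right (1 - a ^ 2)) by lra. rewrite (Rabs_right om) by lra.
  assert (B1 : om * Rabs (Derive (qA om) t) <= 256 * om * exp (- Rabs t)) by nra.
  assert (B2 : (1 - a ^ 2) * Rabs ((Derive W1 t * W2 t - W1 t * Derive W2 t) / W2 t / W2 t) <= 4 * C1 * om * exp (- Rabs t)).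
  { apply Rle_trans with (1 * (8 / 7 * (8 / 7 * (3 * C1 * om * ek)))).
    apply Rmult_le_compat; try lra. apply Rabs_pos.
    assert (0 <= C1 * om) by nra. nra. }
  lra.
Qed.

Lemma S_wodd om a C0 C1 W1 W2 K2 K1 K0 (S : Setting om a C0 C1 W1 W2 K2 K1 K0) y :
  wf W2 (- y) = - wf W2 y.
Proof.
  pose proof (s_even _ _ _ _ _ _ _ _ _ S) as Ev.
  assert (HD : Derive W2 (- y) = - Derive W2 y).
  { rewrite (Derive_ext W2 (fun z => W2 (- z))) by (intros; rewrite Ev; auto).
    apply is_derive_unique. 
    destruct (S_ex_derive_W _ _ _ _ _ _ _ _ _ S y) as [_ [E2 _]].
    auto_derive. rewrite Ropp_involutive. auto. rewrite Ropp_involutive. 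
    change (fun x : R => W2 x) with W2. ring. }
  unfold wf. rewrite HD, Ev. field. pose proof (S_W2pos _ _ _ _ _ _ _ _ _ S y). lra.
Qed.

Lemma S_wlim om a C0 C1 W1 W2 K2 K1 K0 (S : Setting om a C0 C1 W1 W2 K2 K1 K0) :
  exists M, forall y, 0 <= y -> Rabs (wf W2 y + a) <= M * exp (- y).
Proof.
  getS S. destruct H5 as [Ha2 [Ha4 [Hk [Hlam Hka]]]].
  set (k := sqrt (2 - a ^ 2)) in *.
  set (h := fun s => exp (- a * s) * (Derive W2 s + a * W2 s)).
  assert (HW2 := s_W2 _ _ _ _ _ _ _ _ _ S).
  assert (Hexd : forall s, ex_derive h s).
  { intros s. unfold h.
    assert (E1 : ex_derive (Derive W2) s) by apply (HW2 1%nat).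
    assert (E2 : ex_derive W2 s) by apply (HW2 0%nat).
    auto_derive. auto. }
  assert (HDh : forall s, Derive h s = exp (- a * s) * ((1 - a ^ 2) * (W2 s - W1 s) - om * qA om s * W2 s)).
  { intros s. apply is_derive_unique. unfold h.
    assert (E1 : ex_derive (Derive W2) s) by apply (HW2 1%nat).
    assert (E2 : ex_derive W2 s) by apply (HW2 0%nat).
    auto_derive. auto. change (fun x : R => Derive W2 x) with (Derive W2). change (fun x : R => W2 x) with W2.
    change (Derive (Derive W2) s) with (Derive_n W2 2 s). rewrite (S_W2dd _ _ _ _ _ _ _ _ _ S s). ring. }
  set (B := om * (C0 + 72)). set (be := a + k).
  assert (Hbe : 0 < be) by (unfold be; lra).
  assert (HB : forall s, 0 <= s -> Rabs (Derive h s) <= B * exp (- be * s)).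
  { intros s Hs. rewrite HDh.
    pose proof (S_diff0' _ _ _ _ _ _ _ _ _ S s) as D0.
    pose proof (S_W2 _ _ _ _ _ _ _ _ _ S s) as HW.
    destruct (S_q _ _ _ _ _ _ _ _ _ S) as [_ [_ [Hq _]]].
    pose proof (Hq s) as Hqs.
    rewrite (Rabs_right s) in D0, HW, Hqs by lra. fold k in D0.
    set (ea := exp (- a * s)) in *. set (ek := exp (- (k - a) * s)) in *.
    assert (Hea : 0 < ea) by apply exp_pos. assert (Hek : 0 < ek) by apply exp_pos.
    assert (E4 : exp (- (4) * s) * ea * ea <= exp (- be * s)).
    { unfold ea. rewrite <- !exp_plus. apply exp_le. unfold be. nra. }
    assert (Ek : ek * ea * ea = exp (- be * s)).
    { unfold ek, ea. rewrite <- !exp_plus. f_equal. unfold be. ring. }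
    rewrite Rabs_mult. rewrite (Rabs_right ea) by lra.
    eapply Rle_trans. apply Rmult_le_compat_l. lra. apply Rabs_triang. rewrite Rabs_Ropp, !Rabs_mult.
    rewrite (Rabs_right (1 - a ^ 2)) by lra. rewrite (Rabs_right om) by lra.
    rewrite (Rabs_right (qA om s)) by lra. rewrite (Rabs_right (W2 s)) by lra.
    assert (T1 : (1 - a ^ 2) * Rabs (W2 s - W1 s) <= C0 * om * ek * ea).
    { apply Rle_trans with (1 * Rabs (W2 s - W1 s)). apply Rmult_le_compat_r. apply Rabs_pos. lra. lra. }
    assert (T2 : om * qA om s * W2 s <= om * (64 * exp (- (4) * s)) * (9 / 8 * ea)).
    { apply Rmult_le_compat. nra. lra. apply Rmult_le_compat_l; lra. lra. }
    assert (T3 : ea * ((1 - a ^ 2) * Rabs (W2 s - W1 s) + om * qA om s * W2 s) <=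
                 ea * (C0 * om * ek * ea + om * (64 * exp (- (4) * s)) * (9 / 8 * ea))).
    { apply Rmult_le_compat_l; lra. }
    eapply Rle_trans. exact T3.
    replace (ea * (C0 * om * ek * ea + om * (64 * exp (- (4) * s)) * (9 / 8 * ea))) with
      (C0 * om * (ek * ea * ea) + 72 * om * (exp (- (4) * s) * ea * ea)) by field.
    rewrite Ek. unfold B.
    assert (72 * om * (exp (- (4) * s) * ea * ea) <= 72 * om * exp (- be * s)) by (apply Rmult_le_compat_l; lra).
    lra. }
  assert (Hlim : forall eps, 0 < eps -> exists S0, forall s, S0 <= s -> Rabs (h s) <= eps).
  { intros eps He.
    destruct (exp_small (2 * C1 * om + 9 / 8 * a) (2 * a) eps ltac:(lra) He) as [X [HX0 HX]].
    exists X. intros s Hs.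
    pose proof (S_W2d _ _ _ _ _ _ _ _ _ S s) as Wd. pose proof (S_W2 _ _ _ _ _ _ _ _ _ S s) as HW.
    rewrite (Rabs_right s) in Wd, HW by lra.
    set (ea := exp (- a * s)) in *. assert (Hea : 0 < ea) by apply exp_pos.
    assert (Ee : ea * ea = exp (- (2 * a) * s)) by (unfold ea; rewrite <- exp_plus; f_equal; ring).
    unfold h. fold ea. rewrite Rabs_mult, (Rabs_right ea) by lra.
    assert (Rabs (Derive W2 s + a * W2 s) <= (2 * C1 * om + 9 / 8 * a) * ea).
    { eapply Rle_trans. apply Rabs_triang. rewrite Rabs_mult, (Rabs_right a), (Rabs_right (W2 s)) by lra. nra. }
    specialize (HX s ltac:(lra)). rewrite <- Ee in HX. nra. }
  pose proof (cmp_lemma h B be Hbe Hexd HB Hlim) as Hc.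
  assert (HB0 : 0 <= B) by (unfold B; nra).
  exists (8 / 7 * (B / be)). intros y Hy.
  pose proof (S_W2 _ _ _ _ _ _ _ _ _ S y) as HW. rewrite (Rabs_right y) in HW by lra.
  pose proof (S_W2pos _ _ _ _ _ _ _ _ _ S y) as Hp.
  set (ea := exp (- a * y)) in *. assert (Hea : 0 < ea) by apply exp_pos.
  assert (Hx : Derive W2 y + a * W2 y = exp (a * y) * h y).
  { unfold h. rewrite <- Rmult_assoc. rewrite <- exp_plus. replace (a * y + - a * y) with 0 by ring.
    rewrite exp_0. ring. }
  assert (Hb : Rabs (Derive W2 y + a * W2 y) <= (B / be * exp (- (k - a) * y)) * ea).
  { rewrite Hx. rewrite Rabs_mult, (Rabs_right (exp (a * y))) by (apply Rle_ge; left; apply exp_pos).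
    specialize (Hc y Hy).
    assert (exp (a * y) * Rabs (h y) <= exp (a * y) * (B / be * exp (- be * y))).
    { apply Rmult_le_compat_l. left; apply exp_pos. exact Hc. }
    eapply Rle_trans. exact H5. right.
    unfold ea. rewrite Rmult_assoc. rewrite <- exp_plus. rewrite (Rmult_comm (exp (a * y))).
    rewrite Rmult_assoc. rewrite <- exp_plus. f_equal. f_equal. unfold be. ring. }
  assert (Hd := div_bound _ (W2 y) _ _ Hea (proj1 HW) Hb).
  replace (wf W2 y + a) with ((Derive W2 y + a * W2 y) / W2 y) by (unfold wf; field; lra).
  eapply Rle_trans. exact Hd.
  assert (exp (- (k - a) * y) <= exp (- y)) by (apply exp_le; nra).
  assert (0 <= B / be) by (apply Rdiv_le_0_compat; lra).
  nra.
Qed.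

Lemma S_wlim_neg om a C0 C1 W1 W2 K2 K1 K0 (S : Setting om a C0 C1 W1 W2 K2 K1 K0) :
  exists M, forall y, y <= 0 -> Rabs (wf W2 y - a) <= M * exp (y).
Proof.
  destruct (S_wlim _ _ _ _ _ _ _ _ _ S) as [M HM]. exists M. intros y Hy.
  specialize (HM (- y) ltac:(lra)). rewrite (S_wodd _ _ _ _ _ _ _ _ _ S) in HM.
  rewrite Ropp_involutive in HM. replace (wf W2 y - a) with (- (- wf W2 y + a)) by ring.
  rewrite Rabs_Ropp. exact HM.
Qed.

Definition Gf (om : R) (K2 K1 K0 w q : R -> R) : R -> R := fun y =>
  / 2 * Derive K2 y - / 2 * K1 y - y * K0 y + 4 * Derive_n w 2 y - 4 * w y + 3 * om * Derive q y.

Definition DGf (om : R) (K2 K1 K0 w q : R -> R) : R -> R := fun y =>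
  / 2 * Derive_n K2 2 y - / 2 * Derive K1 y - (K0 y + y * Derive K0 y) + 4 * Derive_n w 3 y
  - 4 * Derive w y + 3 * om * Derive_n q 2 y.

Lemma Gf_deriv om K2 K1 K0 w q : smooth K2 -> smooth K1 -> smooth K0 -> smooth w -> smooth q ->
  forall y, is_derive (Gf om K2 K1 K0 w q) y (DGf om K2 K1 K0 w q y).
Proof.
  intros H2 H1 H0 Hw Hq y. unfold Gf, DGf.
  assert (E1 : ex_derive (Derive K2) y) by apply (H2 1%nat).
  assert (E2 : ex_derive K1 y) by apply (H1 0%nat).
  assert (E3 : ex_derive K0 y) by apply (H0 0%nat).
  assert (E4 : ex_derive (Derive_n w 2) y) by apply (Hw 2%nat).
  assert (E5 : ex_derive w y) by apply (Hw 0%nat).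
  assert (E6 : ex_derive (Derive q) y) by apply (Hq 1%nat).
  auto_derive. repeat split; auto.
  change (fun x : R => Derive K2 x) with (Derive K2). change (fun x : R => K1 x) with K1.
  change (fun x : R => K0 x) with K0. change (fun x : R => Derive_n w 2 x) with (Derive_n w 2).
  change (fun x : R => w x) with w. change (fun x : R => Derive q x) with (Derive q).
  change (Derive (Derive K2) y) with (Derive_n K2 2 y).
  change (Derive (Derive_n w 2) y) with (Derive_n w 3 y).
  change (Derive (Derive q) y) with (Derive_n q 2 y).
  change (Derive (fun x : R => Derive (fun x0 : R => Derive w x0) x) y) with (Derive_n w 3 y). ring.
Qed.

Lemma y_exp_bound y : Rabs y * exp (- Rabs y) <= 2 * exp (- / 2 * Rabs y).
Proof.
  pose proof (exp_ineq1_le (/ 2 * Rabs y)). pose proof (Rabs_pos y).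
  assert (E : exp (- Rabs y) = exp (- / 2 * Rabs y) * exp (- / 2 * Rabs y)) by (rewrite <- exp_plus; f_equal; field).
  rewrite E. pose proof (exp_pos (- / 2 * Rabs y)).
  assert (E2 : exp (/ 2 * Rabs y) * exp (- / 2 * Rabs y) = 1) by (rewrite <- exp_plus; replace (/ 2 * Rabs y + - / 2 * Rabs y) with 0 by ring; apply exp_0).
  assert (Rabs y <= 2 * exp (/ 2 * Rabs y)) by lra.
  assert (Rabs y * exp (- / 2 * Rabs y) <= 2) by nra.
  nra.
Qed.

Lemma Rabs_sum6 (x1 x2 x3 x4 x5 x6 : R) :
  Rabs (x1 + x2 + x3 + x4 + x5 + x6) <= Rabs x1 + Rabs x2 + Rabs x3 + Rabs x4 + Rabs x5 + Rabs x6.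
Proof.
  repeat (eapply Rle_trans; [apply Rabs_triang|]; apply Rplus_le_compat_r). lra.
Qed.

Lemma exp_half y : exp (- Rabs y) <= exp (- / 2 * Rabs y).
Proof. apply exp_le. pose proof (Rabs_pos y). lra. Qed.

Lemma S_G_bound om a C0 C1 W1 W2 K2 K1 K0 (S : Setting om a C0 C1 W1 W2 K2 K1 K0) (l Mw : R) :
  l * l = a * a -> 0 <= Mw ->
  exists M, forall y, Rabs (wf W2 y - l) <= Mw * exp (- Rabs y) ->
   Rabs (Gf om K2 K1 K0 (wf W2) (qA om) y + 4 * l) <= M * exp (- / 2 * Rabs y).
Proof.
  intros Hl HMw. getS S. destruct H5 as [Ha2 [Ha4 [Hk [Hlam Hka]]]].
  assert (Hla : Rabs l = a).
  { assert (Rabs l * Rabs l = a * a) by (rewrite <- Rabs_mult, Hl; apply Rabs_right; nra).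
    pose proof (Rabs_pos l). nra. }
  set (Mw1 := (2 * C0 + 64) * om + (a + 3 * C1 * om) * Mw).
  assert (HMw1 : 0 <= Mw1).
  { unfold Mw1. assert (0 <= (2 * C0 + 64) * om) by (apply Rmult_le_pos; lra). assert (0 <= (a + 3 * C1 * om) * Mw) by (apply Rmult_le_pos; nra). lra. }
  exists (/ 2 * C1 * om + / 2 * C0 * om + 2 * C0 * om + 4 * ((256 + 4 * C1) * om + 2 * (3 * C1 * om) * Mw1)
          + 4 * Mw + 3 * om * 256).
  intros y Hwl.
  set (e := exp (- Rabs y)). set (e2 := exp (- / 2 * Rabs y)).
  assert (He : 0 < e) by apply exp_pos. assert (Hee : e <= e2) by apply exp_half.
  pose proof (y_exp_bound y) as Hye. fold e e2 in Hye.
  pose proof (S_ka _ _ _ _ _ _ _ _ _ S y) as Hka'. fold e in Hka'.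
  pose proof (s_Kb2' _ _ _ _ _ _ _ _ _ S y) as B2. change (Derive_n K2 1 y) with (Derive K2 y) in B2.
  pose proof (s_Kb1 _ _ _ _ _ _ _ _ _ S y) as B1. change (Derive_n K1 0 y) with (K1 y) in B1.
  pose proof (s_Kb0 _ _ _ _ _ _ _ _ _ S y) as B0. change (Derive_n K0 0 y) with (K0 y) in B0.
  set (ek := exp (- (sqrt (2 - a ^ 2) - a) * Rabs y)) in *.
  assert (B2' : Rabs (Derive K2 y) <= C1 * om * e) by (eapply Rle_trans; [exact B2|]; rewrite <- Rmult_assoc; apply Rmult_le_compat_l; nra).
  assert (B1' : Rabs (K1 y) <= C0 * om * e) by (eapply Rle_trans; [exact B1|]; rewrite <- Rmult_assoc; apply Rmult_le_compat_l; nra).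
  assert (B0' : Rabs (K0 y) <= C0 * om * e) by (eapply Rle_trans; [exact B0|]; rewrite <- Rmult_assoc; apply Rmult_le_compat_l; nra).
  pose proof (S_w _ _ _ _ _ _ _ _ _ S y) as Hw.
  pose proof (S_eps _ _ _ _ _ _ _ _ _ S y) as Heps. fold e in Heps.
  pose proof (S_wdd_bound _ _ _ _ _ _ _ _ _ S y) as Hwdd. fold e in Hwdd.
  destruct (S_q _ _ _ _ _ _ _ _ _ S) as [_ [_ [_ [_ [Hq' _]]]]].
  pose proof (Hq' y) as Hqy. pose proof (exp_4_1 y) as H41. fold e in H41.
  set (w := wf W2 y) in *. set (w1 := Derive (wf W2) y) in *. set (w2 := Derive_n (wf W2) 2 y) in *.
  assert (Hw1 : Rabs w1 <= Mw1 * e).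
  { assert (X : Rabs (a ^ 2 - w * w) <= (a + 3 * C1 * om) * (Mw * e)).
    { replace (a ^ 2 - w * w) with ((l - w) * (l + w)) by (simpl; nra).
      rewrite Rabs_mult. rewrite Rmult_comm. apply Rmult_le_compat. apply Rabs_pos. apply Rabs_pos.
      eapply Rle_trans. apply Rabs_triang. lra. rewrite Rabs_minus_sym. exact Hwl. }
    replace w1 with ((w1 - (a ^ 2 - w * w)) + (a ^ 2 - w * w)) by ring.
    eapply Rle_trans. apply Rabs_triang. unfold Mw1. nra. }
  assert (Hw2 : Rabs w2 <= ((256 + 4 * C1) * om + 2 * (3 * C1 * om) * Mw1) * e).
  { replace w2 with ((w2 + 2 * w * w1) - 2 * w * w1) by ring.
    eapply Rle_trans. apply Rabs_triang. rewrite Rabs_Ropp, !Rabs_mult, (Rabs_right 2) by lra.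
    assert (Rabs w * Rabs w1 <= (3 * C1 * om) * (Mw1 * e)) by (apply Rmult_le_compat; try apply Rabs_pos; lra).
    nra. }
  unfold Gf. fold w w2.
  replace (/ 2 * Derive K2 y - / 2 * K1 y - y * K0 y + 4 * w2 - 4 * w + 3 * om * Derive (qA om) y + 4 * l)
    with (/ 2 * Derive K2 y + (- (/ 2 * K1 y)) + (- (y * K0 y)) + 4 * w2 + (- (4 * (w - l))) + 3 * om * Derive (qA om) y) by ring.
  eapply Rle_trans. apply Rabs_sum6.
  rewrite !Rabs_Ropp, !Rabs_mult.
  rewrite (Rabs_right (/ 2)) by lra. rewrite (Rabs_right 4) by lra. rewrite (Rabs_right 3) by lra.
  rewrite (Rabs_right om) by lra.
  assert (T1 : / 2 * Rabs (Derive K2 y) <= / 2 * C1 * om * e2).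
  { assert (C1 * om * e <= C1 * om * e2) by (apply Rmult_le_compat_l; nra). lra. }
  assert (T2 : / 2 * Rabs (K1 y) <= / 2 * C0 * om * e2).
  { assert (C0 * om * e <= C0 * om * e2) by (apply Rmult_le_compat_l; nra). lra. }
  assert (T3 : Rabs y * Rabs (K0 y) <= 2 * C0 * om * e2).
  { apply Rle_trans with (Rabs y * (C0 * om * e)). apply Rmult_le_compat_l. apply Rabs_pos. exact B0'.
    replace (Rabs y * (C0 * om * e)) with ((C0 * om) * (Rabs y * e)) by ring.
    replace (2 * C0 * om * e2) with ((C0 * om) * (2 * e2)) by ring.
    apply Rmult_le_compat_l. nra. exact Hye. }
  set (c2 := (256 + 4 * C1) * om + 2 * (3 * C1 * om) * Mw1) in *.
  assert (Hc2 : 0 <= c2) by (unfold c2; assert (0 <= 3 * C1 * om * Mw1) by (repeat apply Rmult_le_pos; nra); nra).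
  assert (T4 : 4 * Rabs w2 <= 4 * c2 * e2).
  { assert (c2 * e <= c2 * e2) by (apply Rmult_le_compat_l; lra). lra. }
  assert (T5 : 4 * Rabs (w - l) <= 4 * Mw * e2).
  { fold e in Hwl. assert (Mw * e <= Mw * e2) by (apply Rmult_le_compat_l; lra). lra. }
  assert (T6 : 3 * om * Rabs (Derive (qA om) y) <= 3 * om * 256 * e2).
  { assert (Rabs (Derive (qA om) y) <= 256 * e2) by lra.
    assert (3 * om * Rabs (Derive (qA om) y) <= 3 * om * (256 * e2)) by (apply Rmult_le_compat_l; lra). lra. }
  lra.
Qed.

Lemma S_G_lim_p om a C0 C1 W1 W2 K2 K1 K0 (S : Setting om a C0 C1 W1 W2 K2 K1 K0) :
  filterlim (Gf om K2 K1 K0 (wf W2) (qA om)) (Rbar_locally p_infty) (locally (4 * a)).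
Proof.
  destruct (S_wlim _ _ _ _ _ _ _ _ _ S) as [Mw HMw].
  assert (HM0 : 0 <= Mw).
  { pose proof (HMw 0 ltac:(lra)). rewrite Ropp_0, exp_0 in H. pose proof (Rabs_pos (wf W2 0 + a)). lra. }
  destruct (S_G_bound _ _ _ _ _ _ _ _ _ S (- a) Mw ltac:(ring) HM0) as [M HM].
  apply (lim_pinf _ _ M (/ 2)). lra. intros y Hy.
  replace (Gf om K2 K1 K0 (wf W2) (qA om) y - 4 * a) with (Gf om K2 K1 K0 (wf W2) (qA om) y + 4 * - a) by ring.
  replace (- / 2 * y) with (- / 2 * Rabs y) by (rewrite Rabs_right; lra).
  apply HM. rewrite (Rabs_right y) by lra. replace (wf W2 y - - a) with (wf W2 y + a) by ring. apply HMw; auto.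
Qed.

Lemma S_G_lim_m om a C0 C1 W1 W2 K2 K1 K0 (S : Setting om a C0 C1 W1 W2 K2 K1 K0) :
  filterlim (Gf om K2 K1 K0 (wf W2) (qA om)) (Rbar_locally m_infty) (locally (- (4 * a))).
Proof.
  destruct (S_wlim_neg _ _ _ _ _ _ _ _ _ S) as [Mw HMw].
  assert (HM0 : 0 <= Mw).
  { pose proof (HMw 0 ltac:(lra)). rewrite exp_0 in H. pose proof (Rabs_pos (wf W2 0 - a)). lra. }
  destruct (S_G_bound _ _ _ _ _ _ _ _ _ S a Mw ltac:(ring) HM0) as [M HM].
  apply (lim_minf _ _ M (/ 2)). lra. intros y Hy.
  replace (Gf om K2 K1 K0 (wf W2) (qA om) y - - (4 * a)) with (Gf om K2 K1 K0 (wf W2) (qA om) y + 4 * a) by ring.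
  replace (/ 2 * y) with (- / 2 * Rabs y) by (rewrite Rabs_left1; lra).
  apply HM. rewrite (Rabs_left1 y) by lra. replace (- - y) with y by ring. apply HMw; auto.
Qed.

Lemma S_smooths om a C0 C1 W1 W2 K2 K1 K0 (S : Setting om a C0 C1 W1 W2 K2 K1 K0) :
  smooth K2 /\ smooth K1 /\ smooth K0 /\ smooth (wf W2) /\ smooth (qA om).
Proof.
  split. apply (s_K2 _ _ _ _ _ _ _ _ _ S). split. apply (s_K1 _ _ _ _ _ _ _ _ _ S).
  split. apply (s_K0 _ _ _ _ _ _ _ _ _ S). split. apply (S_smooth_w _ _ _ _ _ _ _ _ _ S).
  destruct (S_q _ _ _ _ _ _ _ _ _ S) as [_ [Hq _]]. exact Hq.
Qed.

Lemma S_DG_int om a C0 C1 W1 W2 K2 K1 K0 (S : Setting om a C0 C1 W1 W2 K2 K1 K0) :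
  is_RInt_gen (DGf om K2 K1 K0 (wf W2) (qA om)) (Rbar_locally m_infty) (Rbar_locally p_infty) (8 * a).
Proof.
  destruct (S_smooths _ _ _ _ _ _ _ _ _ S) as [H2 [H1 [H0 [Hw Hq]]]].
  pose proof (Gf_deriv om K2 K1 K0 (wf W2) (qA om) H2 H1 H0 Hw Hq) as HD.
  apply is_RInt_gen_ext with (Derive (Gf om K2 K1 K0 (wf W2) (qA om))).
  apply filter_forall. intros ab x _. apply is_derive_unique. apply HD.
  replace (8 * a) with (4 * a - - (4 * a)) by ring.
  apply is_RInt_gen_Derive.
  - apply filter_forall. intros ab x _. eexists. apply HD.
  - apply filter_forall. intros ab x _. apply continuous_ext with (DGf om K2 K1 K0 (wf W2) (qA om)).
    intros t. symmetry. apply is_derive_unique. apply HD.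
    apply (ex_derive_continuous (DGf om K2 K1 K0 (wf W2) (qA om))). unfold DGf.
    assert (E1 : ex_derive (Derive_n K2 2) x) by apply H2.
    assert (E2 : ex_derive (Derive K1) x) by apply (H1 1%nat).
    assert (E3 : ex_derive K0 x) by apply (H0 0%nat).
    assert (E3' : ex_derive (Derive K0) x) by apply (H0 1%nat).
    assert (E4 : ex_derive (Derive_n (wf W2) 3) x) by apply Hw.
    assert (E5 : ex_derive (Derive (wf W2)) x) by apply (Hw 1%nat).
    assert (E6 : ex_derive (Derive_n (qA om) 2) x) by apply Hq.
    auto_derive. repeat split; auto.
  - apply (S_G_lim_m _ _ _ _ _ _ _ _ _ S).
  - apply (S_G_lim_p _ _ _ _ _ _ _ _ _ S).
Qed.

Definition Rf (om : R) (K2 K1 w q : R -> R) : R -> R := fun y =>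
  - (2 * om / 3) * (q y - qf 1 y) - om ^ 2 / 3 * (q y * q y) - 2 * om * w y * Derive q y
  + 2 * K2 y * Derive w y + K1 y * w y.

Lemma S_Y0_decomp om a C0 C1 W1 W2 K2 K1 K0 (S : Setting om a C0 C1 W1 W2 K2 K1 K0) y :
  Y0 K2 K1 K0 y = DGf om K2 K1 K0 (wf W2) (qA om) y - 2 * om / 3 * qf 1 y + Rf om K2 K1 (wf W2) (qA om) y.
Proof.
  destruct (S_q _ _ _ _ _ _ _ _ _ S) as [Hq [Hsq _]].
  assert (Hsq' : smooth (fun y => Q_om om y ^ 4)) by (apply smooth_ext with (qA om); auto).
  pose proof (K0_formula om W2 K2 K1 K0 (s_W2 _ _ _ _ _ _ _ _ _ S)
    (fun y => Rgt_not_eq _ _ (S_W2pos _ _ _ _ _ _ _ _ _ S y)) Hsq' (s_int _ _ _ _ _ _ _ _ _ S) y) as HK.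
  cbv zeta in HK.
  rewrite (Derive_n_ext (fun y => Q_om om y ^ 4) (qA om)) in HK by auto.
  rewrite (Derive_ext (fun y => Q_om om y ^ 4) (qA om)) in HK by auto.
  rewrite Hq in HK.
  unfold Y0, DGf, Rf. rewrite HK. field.
Qed.

Lemma S_R_cont om a C0 C1 W1 W2 K2 K1 K0 (S : Setting om a C0 C1 W1 W2 K2 K1 K0) x :
  continuous (Rf om K2 K1 (wf W2) (qA om)) x.
Proof.
  destruct (S_smooths _ _ _ _ _ _ _ _ _ S) as [H2 [H1 [H0 [Hw Hq]]]].
  apply (ex_derive_continuous (Rf om K2 K1 (wf W2) (qA om))). unfold Rf.
  assert (E1 : ex_derive (qA om) x) by apply (Hq 0%nat).
  assert (E2 : ex_derive (qf 1) x) by (apply (smooth_qf 1 ltac:(lra) 0%nat)).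
  assert (E3 : ex_derive (Derive (qA om)) x) by apply (Hq 1%nat).
  assert (E4 : ex_derive (wf W2) x) by apply (Hw 0%nat).
  assert (E5 : ex_derive (Derive (wf W2)) x) by apply (Hw 1%nat).
  assert (E6 : ex_derive K2 x) by apply (H2 0%nat).
  assert (E7 : ex_derive K1 x) by apply (H1 0%nat).
  auto_derive. repeat split; auto.
Qed.

Definition Mr (C0 C1 : R) := 569 + 342 + 1536 * C1 + 2 * C0 * (65 + 2 * C0 + 2 * C1 ^ 2) + 3 * C0 * C1.

Lemma S_R_bound om a C0 C1 W1 W2 K2 K1 K0 (S : Setting om a C0 C1 W1 W2 K2 K1 K0) y :
  Rabs (Rf om K2 K1 (wf W2) (qA om) y) <= Mr C0 C1 * om ^ 2 * exp (- (1) * Rabs y).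
Proof.
  getS S. destruct H5 as [Ha2 [Ha4 [Hk [Hlam Hka]]]].
  destruct (S_q _ _ _ _ _ _ _ _ _ S) as [_ [_ [Hqb [Hq16 [Hq' Hqd]]]]].
  replace (- (1) * Rabs y) with (- Rabs y) by ring.
  set (e := exp (- Rabs y)). assert (He : 0 < e) by apply exp_pos.
  pose proof (exp_4_1 y) as H41. fold e in H41.
  pose proof (S_ka _ _ _ _ _ _ _ _ _ S y) as Hka'. fold e in Hka'.
  pose proof (s_Kb2 _ _ _ _ _ _ _ _ _ S y) as B2. change (Derive_n K2 0 y) with (K2 y) in B2.
  pose proof (s_Kb1 _ _ _ _ _ _ _ _ _ S y) as B1. change (Derive_n K1 0 y) with (K1 y) in B1.
  set (ek := exp (- (sqrt (2 - a ^ 2) - a) * Rabs y)) in *.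
  assert (B2' : Rabs (K2 y) <= C0 * om * e) by (eapply Rle_trans; [exact B2|]; rewrite <- Rmult_assoc; apply Rmult_le_compat_l; nra).
  assert (B1' : Rabs (K1 y) <= C0 * om * e) by (eapply Rle_trans; [exact B1|]; rewrite <- Rmult_assoc; apply Rmult_le_compat_l; nra).
  pose proof (S_w _ _ _ _ _ _ _ _ _ S y) as Hw.
  pose proof (S_wd_bound _ _ _ _ _ _ _ _ _ S y) as Hwd.
  pose proof (Hqb y) as Hqy. pose proof (Hq16 y) as Hqy16. pose proof (Hq' y) as Hq'y. pose proof (Hqd y) as Hqdy.
  set (q := qA om y) in *. set (q0 := qf 1 y) in *. set (q1 := Derive (qA om) y) in *.
  set (w := wf W2 y) in *. set (w1 := Derive (wf W2) y) in *.
  unfold Rf. fold q q0 q1 w w1.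
  replace (- (2 * om / 3) * (q - q0) - om ^ 2 / 3 * (q * q) - 2 * om * w * q1 + 2 * K2 y * w1 + K1 y * w)
    with (- (2 * om / 3) * (q - q0) + - (om ^ 2 / 3 * (q * q)) + - (2 * om * w * q1) + 2 * K2 y * w1 + K1 y * w) by ring.
  eapply Rle_trans. 
  { eapply Rle_trans. apply Rabs_triang. apply Rplus_le_compat_r.
    eapply Rle_trans. apply Rabs_triang. apply Rplus_le_compat_r.
    eapply Rle_trans. apply Rabs_triang. apply Rplus_le_compat_r.
    apply Rabs_triang. }
  assert (R1 : Rabs (- (2 * om / 3) * (q - q0)) = 2 * om / 3 * Rabs (q - q0)).
  { rewrite Rabs_mult, Rabs_Ropp, (Rabs_right (2 * om / 3)) by lra. auto. }
  assert (R2 : Rabs (- (om ^ 2 / 3 * (q * q))) = om ^ 2 / 3 * (q * q)).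
  { rewrite Rabs_Ropp. apply Rabs_right. assert (0 <= om ^ 2) by nra. assert (0 <= q * q) by nra.
    apply Rle_ge. apply Rmult_le_pos; lra. }
  assert (R3 : Rabs (- (2 * om * w * q1)) = 2 * om * Rabs w * Rabs q1).
  { rewrite Rabs_Ropp, !Rabs_mult, (Rabs_right 2) by lra. rewrite (Rabs_right om) by lra. auto. }
  assert (R4 : Rabs (2 * K2 y * w1) = 2 * Rabs (K2 y) * Rabs w1).
  { rewrite !Rabs_mult, (Rabs_right 2) by lra. auto. }
  assert (R5 : Rabs (K1 y * w) = Rabs (K1 y) * Rabs w) by apply Rabs_mult.
  rewrite R1, R2, R3, R4, R5.
  assert (T1 : 2 * om / 3 * Rabs (q - q0) <= 569 * om ^ 2 * e).
  { assert (Rabs (q - q0) <= 320 * (8 / 3 * om) * e).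
    { eapply Rle_trans. exact Hqdy. apply Rmult_le_compat_l. nra. exact H41. }
    assert (2 * om / 3 * Rabs (q - q0) <= 2 * om / 3 * (320 * (8 / 3 * om) * e)) by (apply Rmult_le_compat_l; lra).
    assert (0 <= om ^ 2 * e) by (apply Rmult_le_pos; nra). nra. }
  assert (T2 : om ^ 2 / 3 * (q * q) <= 342 * om ^ 2 * e).
  { assert (q * q <= 16 * (64 * e)) by (apply Rmult_le_compat; lra).
    assert (0 <= om ^ 2) by nra.
    assert (om ^ 2 / 3 * (q * q) <= om ^ 2 / 3 * (16 * (64 * e))) by (apply Rmult_le_compat_l; lra).
    assert (0 <= om ^ 2 * e) by (apply Rmult_le_pos; nra). nra. }
  assert (T3 : 2 * om * Rabs w * Rabs q1 <= 1536 * C1 * om ^ 2 * e).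
  { assert (Rabs w * Rabs q1 <= (3 * C1 * om) * (256 * e)) by (apply Rmult_le_compat; try apply Rabs_pos; lra).
    assert (2 * om * (Rabs w * Rabs q1) <= 2 * om * ((3 * C1 * om) * (256 * e))) by (apply Rmult_le_compat_l; lra).
    nra. }
  assert (T4 : 2 * Rabs (K2 y) * Rabs w1 <= 2 * C0 * (65 + 2 * C0 + 2 * C1 ^ 2) * om ^ 2 * e).
  { assert (Rabs (K2 y) * Rabs w1 <= (C0 * om * e) * ((65 + 2 * C0 + 2 * C1 ^ 2) * om)) by (apply Rmult_le_compat; try apply Rabs_pos; lra).
    nra. }
  assert (T5 : Rabs (K1 y) * Rabs w <= 3 * C0 * C1 * om ^ 2 * e).
  { assert (Rabs (K1 y) * Rabs w <= (C0 * om * e) * (3 * C1 * om)) by (apply Rmult_le_compat; try apply Rabs_pos; lra).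
    nra. }
  unfold Mr.
  assert (Ex : (569 + 342 + 1536 * C1 + 2 * C0 * (65 + 2 * C0 + 2 * C1 ^ 2) + 3 * C0 * C1) * om ^ 2 * e =
     569 * om ^ 2 * e + 342 * om ^ 2 * e + 1536 * C1 * om ^ 2 * e + 2 * C0 * (65 + 2 * C0 + 2 * C1 ^ 2) * om ^ 2 * e
     + 3 * C0 * C1 * om ^ 2 * e) by ring.
  rewrite Ex. 
  assert (E2 : 2 * om * w * q1 = 2 * om * w * q1) by reflexivity.
  lra.
Qed.

Lemma S_main om a C0 C1 W1 W2 K2 K1 K0 (S : Setting om a C0 C1 W1 W2 K2 K1 K0) :
  exists l, is_RInt_gen (Y0 K2 K1 K0) (Rbar_locally m_infty) (Rbar_locally p_infty) l /\
    Rabs (l - 32 / 9 * om) <= (8 * C0 + 2 * Mr C0 C1) * om ^ 2.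
Proof.
  destruct (int_dom (Rf om K2 K1 (wf W2) (qA om)) (Mr C0 C1 * om ^ 2) 1 ltac:(lra)
    (S_R_cont _ _ _ _ _ _ _ _ _ S) (S_R_bound _ _ _ _ _ _ _ _ _ S)) as [lR [HR HlR]].
  pose proof (S_DG_int _ _ _ _ _ _ _ _ _ S) as HDG.
  pose proof q0_integral as Hq0.
  exists (8 * a - 2 * om / 3 * (16 / 3) + lR). split.
  - apply is_RInt_gen_ext with
      (fun y => plus (minus (DGf om K2 K1 K0 (wf W2) (qA om) y) (scal (2 * om / 3) (qf 1 y))) (Rf om K2 K1 (wf W2) (qA om) y)).
    + apply filter_forall. intros ab x _. rewrite (S_Y0_decomp _ _ _ _ _ _ _ _ _ S x).
      unfold plus, minus, scal, opp; simpl. unfold mult; simpl. reflexivity.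
    + apply (is_RInt_gen_plus (V := R_NormedModule)).
      apply (is_RInt_gen_minus (V := R_NormedModule)). exact HDG.
      apply (is_RInt_gen_scal (V := R_NormedModule)). exact Hq0. exact HR.
  - getS S. pose proof (s_a_close _ _ _ _ _ _ _ _ _ S).
    replace (8 * a - 2 * om / 3 * (16 / 3) + lR - 32 / 9 * om) with (8 * (a - 8 / 9 * om) + lR) by field.
    eapply Rle_trans. apply Rabs_triang. rewrite Rabs_mult, (Rabs_right 8) by lra.
    replace (2 * (Mr C0 C1 * om ^ 2) / 1) with (2 * Mr C0 C1 * om ^ 2) in HlR by field.
    lra.
Qed.

Lemma nonneg_of_bound (X c P : R) : 0 <= X -> X <= c * P -> 0 < P -> 0 <= c.
Proof.
  intros H1 H2 H3. destruct (Rle_lt_dec 0 c) as [h|h]; auto.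
  assert (c * P < 0) by (nra). lra.
Qed.

Theorem lemma6
  (om0 : R) (alpha : R -> R) (W1 W2 K2 K1 K0 : R -> R -> R) (C : nat -> R) :
  0 < om0 ->
  (* alpha smooth and positive, alpha = 8/9 om + O(om^2) *)
  smooth_on 0 om0 alpha ->
  (forall om, 0 < om < om0 -> 0 < alpha om) ->
  (forall om, 0 < om < om0 -> Rabs (alpha om - 8 / 9 * om) <= C 0%nat * om ^ 2) ->
  (forall om, 0 < om < om0 ->
     let a := alpha om in
     let lam := 1 - a ^ 2 in
     let kap := sqrt (2 - a ^ 2) in
     (* W1, W2 smooth, real, even *)
     smooth (W1 om) /\ smooth (W2 om) /\
     (forall y : R, W1 om (- y) = W1 om y) /\ (forall y : R, W2 om (- y) = W2 om y) /\
     (* eigenvalue system *)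
     (forall y : R, M_plus_op om (W1 om) y = lam * W2 om y) /\
     (forall y : R, M_minus_op om (W2 om) y = lam * W1 om y) /\
     (* bounds, constants independent of om and y *)
     (forall (k : nat) (y : R),
        Rabs (Derive_n (W1 om) k y) <= C k * (om ^ k * exp (- a * Rabs y) + om * exp (- Rabs y)) /\
        Rabs (Derive_n (W2 om) k y) <= C k * (om ^ k * exp (- a * Rabs y) + om * exp (- Rabs y))) /\
     (forall (k : nat) (y : R),
        Rabs (Derive_n (fun z => W1 om z - W2 om z) k y) <= C k * (om * exp (- kap * Rabs y))) /\
     (forall y : R,
        Rabs (W1 om y - exp (- a * Rabs y)) <= C 0%nat * (om * exp (- a * Rabs y)) /\
        Rabs (W2 om y - exp (- a * Rabs y)) <= C 0%nat * (om * exp (- a * Rabs y))) /\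
     (* K2, K1, K0 smooth, determined by U M_+ M_- = K U *)
     smooth (K2 om) /\ smooth (K1 om) /\ smooth (K0 om) /\
     (forall f : R -> R, smooth f -> forall y : R,
        Uop (W2 om) (M_plus_op om (M_minus_op om f)) y
        = Kop (K2 om) (K1 om) (K0 om) (Uop (W2 om) f) y) /\
     (forall (k : nat) (y : R),
        Rabs (Derive_n (K2 om) k y) <= C k * (om * exp (- (kap - a) * Rabs y)) /\
        Rabs (Derive_n (K1 om) k y) <= C k * (om * exp (- (kap - a) * Rabs y)) /\
        Rabs (Derive_n (K0 om) k y) <= C k * (om * exp (- (kap - a) * Rabs y)))) ->
  exists om1 D : R, 0 < om1 /\
    forall om, 0 < om < om1 ->
      ex_RInt_gen (Y0 (K2 om) (K1 om) (K0 om))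
                  (Rbar_locally m_infty) (Rbar_locally p_infty) /\
      Rabs (RInt_gen (Y0 (K2 om) (K1 om) (K0 om))
                     (Rbar_locally m_infty) (Rbar_locally p_infty) - 32 / 9 * om)
        <= D * om ^ 2.
Proof.
  intros Hom0 _ Hpos Hclose Hbig.
  set (C0 := C 0%nat). set (C1 := C 1%nat).
  set (d := / (8 * (1 + Rabs C0))).
  assert (Hd : 0 < d) by (unfold d; apply Rinv_0_lt_compat; pose proof (Rabs_pos C0); lra).
  exists (Rmin om0 d), (8 * C0 + 2 * Mr C0 C1). split.
  { apply Rmin_glb_lt; lra. }
  intros om [Hom Hom1].
  assert (Homd : om < d) by (eapply Rlt_le_trans; [exact Hom1| apply Rmin_r]).
  assert (Homo : om < om0) by (eapply Rlt_le_trans; [exact Hom1| apply Rmin_l]).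
  assert (Hsm : om <= 1 / 8 /\ Rabs C0 * om <= 1 / 8).
  { pose proof (Rabs_pos C0).
    assert (E : d * (8 * (1 + Rabs C0)) = 1) by (unfold d; field; lra).
    split; nra. }
  specialize (Hbig om (conj Hom Homo)). cbv zeta in Hbig.
  destruct Hbig as [HW1 [HW2 [Hev1 [Hev2 [Hp [Hm [HWb [Hdiff [Hclose2 [HK2 [HK1 [HK0 [Hint HKb]]]]]]]]]]]]].
  assert (HC0 : 0 <= C0).
  { destruct (Hclose2 0) as [X _]. pose proof (Rabs_pos (W1 om 0 - exp (- alpha om * Rabs 0))).
    pose proof (exp_pos (- alpha om * Rabs 0)). fold C0 in X.
    eapply nonneg_of_bound. 2: exact X. apply Rabs_pos. apply Rmult_lt_0_compat; lra. }
  assert (HC1 : 0 <= C1).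
  { destruct (HKb 1%nat 0) as [X _]. pose proof (Rabs_pos (Derive_n (K2 om) 1 0)).
    pose proof (exp_pos (- (sqrt (2 - alpha om ^ 2) - alpha om) * Rabs 0)). fold C1 in X.
    eapply nonneg_of_bound. 2: exact X. apply Rabs_pos. apply Rmult_lt_0_compat; lra. }
  assert (S : Setting om (alpha om) C0 C1 (W1 om) (W2 om) (K2 om) (K1 om) (K0 om)).
  { split.
    - exact Hom.
    - lra.
    - rewrite Rabs_right in Hsm by lra. lra.
    - exact HC0.
    - exact HC1.
    - apply Hpos. lra.
    - apply Hclose. lra.
    - exact HW1.
    - exact HW2.
    - exact Hev2.
    - exact Hm.
    - intros y. apply (HWb 1%nat y).
    - intros y. apply (Hdiff 0%nat y).
    - intros y. apply (Hdiff 1%nat y).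
    - intros y. apply (Hclose2 y).
    - exact HK2.
    - exact HK1.
    - exact HK0.
    - exact Hint.
    - intros y. apply (HKb 0%nat y).
    - intros y. apply (HKb 0%nat y).
    - intros y. apply (HKb 0%nat y).
    - intros y. apply (HKb 1%nat y). }
  destruct (S_main _ _ _ _ _ _ _ _ _ S) as [l [Hl Hb]].
  split.
  - exists l. exact Hl.
  - rewrite (is_RInt_gen_unique (Y0 (K2 om) (K1 om) (K0 om)) l Hl). exact Hb.
Qed.
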